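(* Let $h\ge0$. The minimal helicoidal surfaces of pitch $h$ in $\mathbb{S}^3$ whose profile curve has non-constant $z$-coordinate are described by the one-parameter family $\mathrm{Hel}^h_c:=X^h(\xi^h_c)$, $0\le c<1/2$, uniquely determined, up to translations along $c_0$, by the spherical angular momenta $$\mathcal K^h_c(z)=-\frac{c\sqrt{h^2+(1-h^2)z^2}}{\sqrt{z^4+h^2c^2}},\qquad 0\le c<1/2,$$ of their profile curves $\xi^h_c$.
   Context: Identify $\mathbb{S}^3$ with the unit sphere of $\mathbb{R}^4$ and let $c_0=\{(x_1,x_2,0,0)\in\mathbb{S}^3\}$. For $h\ge0$ and a regular arc-length parametrized curve $\xi(s)=(x(s),y(s),z(s))$ in $\{(x,y,z)\in\mathbb{S}^2:z>0\}$, the helicoidal surface with pitch $h$ and profile curve $\xi$ is $X^h(\xi)(s,t)=(x\cos ht-y\sin ht,\ x\sin ht+y\cos ht,\ z\cos t,\ z\sin t)$; translations along $c_0$ are the rotations of the $(x_1,x_2)$-plane. The spherical angular momentum of $\xi$ is $\mathcal K=\dot x\,y-x\,\dot y$ (dot = arc-length derivative), regarded as a function of $z$; the sign of $\mathcal K$ depends on orientation. *)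

(* Defs.v *)
From Stdlib Require Import Reals.
From Coquelicot Require Import Coquelicot.
Open Scope R_scope.

Record R4 := mkR4 { r4_1 : R; r4_2 : R; r4_3 : R; r4_4 : R }.

Definition r4_comp (i : nat) (v : R4) : R :=
  match i with 0%nat => r4_1 v | 1%nat => r4_2 v | 2%nat => r4_3 v | _ => r4_4 v end.

Definition r4_add (u v : R4) : R4 :=
  mkR4 (r4_1 u + r4_1 v) (r4_2 u + r4_2 v) (r4_3 u + r4_3 v) (r4_4 u + r4_4 v).
Definition r4_scal (a : R) (v : R4) : R4 :=
  mkR4 (a * r4_1 v) (a * r4_2 v) (a * r4_3 v) (a * r4_4 v).
Definition r4_dot (u v : R4) : R :=
  r4_1 u * r4_1 v + r4_2 u * r4_2 v + r4_3 u * r4_3 v + r4_4 u * r4_4 v.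

Definition pd1 (X : R -> R -> R4) : R -> R -> R4 := fun s t =>
  mkR4 (Derive (fun u => r4_1 (X u t)) s) (Derive (fun u => r4_2 (X u t)) s)
       (Derive (fun u => r4_3 (X u t)) s) (Derive (fun u => r4_4 (X u t)) s).
Definition pd2 (X : R -> R -> R4) : R -> R -> R4 := fun s t =>
  mkR4 (Derive (fun u => r4_1 (X s u)) t) (Derive (fun u => r4_2 (X s u)) t)
       (Derive (fun u => r4_3 (X s u)) t) (Derive (fun u => r4_4 (X s u)) t).

Definition ex_partials (X : R -> R -> R4) (s t : R) : Prop :=
  forall i : nat, (i < 4)%nat ->
    ex_derive (fun u => r4_comp i (X u t)) s /\ ex_derive (fun u => r4_comp i (X s u)) t.

(** X is twice differentiable, lies in S^3, is an immersion (Gram determinant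
    EG - F^2 > 0), and its mean curvature in S^3 vanishes.  The latter is
    expressed as: the vector G X_ss - 2F X_st + E X_tt (= 2(EG-F^2) times the
    mean curvature vector of X in R^4, up to tangential terms) lies in
    span{X_s, X_t, X}, i.e. its component normal to the surface inside
    T S^3 is zero. *)
Definition minimal_in_S3 (U : R -> R -> Prop) (X : R -> R -> R4) : Prop :=
  forall s t, U s t ->
    let Xs := pd1 X s t in
    let Xt := pd2 X s t in
    let Xss := pd1 (pd1 X) s t in
    let Xst := pd2 (pd1 X) s t in
    let Xtt := pd2 (pd2 X) s t in
    let E := r4_dot Xs Xs in
    let F := r4_dot Xs Xt in
    let G := r4_dot Xt Xt in
    r4_dot (X s t) (X s t) = 1 /\
    ex_partials X s t /\ ex_partials (pd1 X) s t /\ ex_partials (pd2 X) s t /\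
    E * G - F ^ 2 > 0 /\
    exists a b c : R,
      r4_add (r4_add (r4_scal G Xss) (r4_scal (- (2 * F)) Xst)) (r4_scal E Xtt)
      = r4_add (r4_add (r4_scal a Xs) (r4_scal b Xt)) (r4_scal c (X s t)).

Definition in_I (a b : Rbar) (s : R) : Prop := Rbar_lt a s /\ Rbar_lt s b.

Definition profile_curve (a b : Rbar) (x y z : R -> R) : Prop :=
  Rbar_lt a b /\
  forall s, in_I a b s ->
    (forall n : nat, ex_derive_n x n s /\ ex_derive_n y n s /\ ex_derive_n z n s) /\
    x s ^ 2 + y s ^ 2 + z s ^ 2 = 1 /\
    0 < z s /\
    (Derive x s) ^ 2 + (Derive y s) ^ 2 + (Derive z s) ^ 2 = 1.

Definition z_nonconstant (a b : Rbar) (z : R -> R) : Prop :=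
  exists s1 s2, in_I a b s1 /\ in_I a b s2 /\ z s1 <> z s2.

Definition helicoidal (h : R) (x y z : R -> R) : R -> R -> R4 := fun s t =>
  mkR4 (x s * cos (h * t) - y s * sin (h * t))
       (x s * sin (h * t) + y s * cos (h * t))
       (z s * cos t) (z s * sin t).

Definition strip (a b : Rbar) : R -> R -> Prop := fun s _ => in_I a b s.

Definition ang_mom (x y : R -> R) (s : R) : R := Derive x s * y s - x s * Derive y s.

Definition Khc (h c w : R) : R :=
  - (c * sqrt (h ^ 2 + (1 - h ^ 2) * w ^ 2)) / sqrt (w ^ 4 + h ^ 2 * c ^ 2).

(* Main.v *)
Require Import Defs.
From Stdlib Require Import Reals Lra Lia Psatz Classical ClassicalEpsilon.
From Coquelicot Require Import Coquelicot.
Open Scope R_scope.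


Lemma in_I_open (a b : Rbar) : open (in_I a b).
Proof. unfold in_I. apply open_and; [apply open_Rbar_gt | apply open_Rbar_lt]. Qed.

Lemma in_I_loc (a b : Rbar) s : in_I a b s -> locally s (in_I a b).
Proof. intros H. apply (locally_open _ _ (in_I_open a b)); auto. Qed.

Lemma in_I_conv (a b : Rbar) s1 s2 u :
  in_I a b s1 -> in_I a b s2 -> s1 <= u <= s2 -> in_I a b u.
Proof.
  intros [H1 H2] [H3 H4] [H5 H6]; split.
  - destruct a as [a| |]; simpl in *; auto; lra.
  - destruct b as [b| |]; simpl in *; auto; lra.
Qed.

Lemma ball_abs (x y e : R) : ball x e y <-> Rabs (y - x) < e.
Proof. split; intro H; exact H. Qed.

Lemma const_on_I (a b : Rbar) (f : R -> R) :
  (forall s, in_I a b s -> is_derive f s 0) ->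
  forall s1 s2, in_I a b s1 -> in_I a b s2 -> f s1 = f s2.
Proof.
  intros Hd s1 s2 H1 H2.
  destruct (MVT_gen f s1 s2 (fun _ => 0)) as [c [Hc Hc2]].
  - intros x Hx. apply Hd. apply (in_I_conv a b (Rmin s1 s2) (Rmax s1 s2)); try lra.
    + unfold Rmin; destruct Rle_dec; auto.
    + unfold Rmax; destruct Rle_dec; auto.
  - intros x Hx. apply continuity_pt_filterlim. apply (ex_derive_continuous (K:=R_AbsRing) (V:=R_NormedModule)).
    exists 0. apply Hd. apply (in_I_conv a b (Rmin s1 s2) (Rmax s1 s2)); auto.
    + unfold Rmin; destruct Rle_dec; auto.
    + unfold Rmax; destruct Rle_dec; auto.
  - lra.
Qed.

Lemma deriv_zero_fun (a b : Rbar) (F : R -> R) s dF :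
  (forall u, in_I a b u -> F u = 0) -> in_I a b s -> is_derive F s dF -> dF = 0.
Proof.
  intros H0 Hs Hd.
  assert (H1 : is_derive (fun _ => 0) s dF).
  { apply (is_derive_ext_loc F). 2: auto.
    apply (locally_open _ _ (in_I_open a b)); auto. }
  assert (H2 : is_derive (fun _:R => 0) s 0) by (auto_derive; auto).
  apply is_derive_unique in H1. apply is_derive_unique in H2. rewrite <- H1. exact H2.
Qed.

Ltac fixeta := repeat match goal with |- context [fun t : R => ?f t] => progress change (fun t : R => f t) with f end.
Ltac fixeta_in H := repeat match type of H with context [fun t : R => ?f t] => progress change (fun t : R => f t) with f in H end.

Lemma cont_nonzero (f : R -> R) s : continuous f s -> f s <> 0 ->
  exists d, 0 < d /\ forall u, Rabs (u - s) < d -> f u <> 0.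
Proof.
  intros Hc Hn.
  assert (He : 0 < Rabs (f s)) by (apply Rabs_pos_lt; auto).
  apply continuity_pt_filterlim in Hc.
  destruct (proj1 (continuity_pt_locally f s) Hc (mkposreal _ He)) as [d Hd]. exists d. split. apply cond_pos.
  intros u Hu. specialize (Hd u Hu). simpl in Hd. intro E. rewrite E in Hd.
  rewrite Rminus_0_l, Rabs_Ropp in Hd. lra.
Qed.

Lemma cont_zero_lim (f : R -> R) s : continuous f s ->
  (forall d, 0 < d -> exists u, Rabs (u - s) < d /\ f u = 0) -> f s = 0.
Proof.
  intros Hc H. destruct (Req_dec (f s) 0) as [E|E]; auto.
  destruct (cont_nonzero f s Hc E) as [d [Hd Hu]].
  destruct (H d Hd) as [u [H1 H2]]. exfalso. apply (Hu u H1 H2).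
Qed.

Lemma deriv_zero_loc (F : R -> R) s dF d : 0 < d ->
  (forall u, Rabs (u - s) < d -> F u = 0) -> is_derive F s dF -> dF = 0.
Proof.
  intros Hd H0 Hder.
  assert (H1 : is_derive (fun _ => 0) s dF).
  { apply (is_derive_ext_loc F). 2: auto.
    exists (mkposreal d Hd). intros u Hu. apply H0. exact Hu. }
  assert (H2 : is_derive (fun _:R => 0) s 0) by (auto_derive; auto).
  apply is_derive_unique in H1. apply is_derive_unique in H2. rewrite <- H1. exact H2.
Qed.

Lemma clopen_right (I P : R -> Prop) :
  (forall s1 s2 u, I s1 -> I s2 -> s1 <= u <= s2 -> I u) ->
  (forall s, I s -> P s -> exists d, 0 < d /\ forall u, I u -> Rabs (u - s) < d -> P u) ->
  (forall s, I s -> (forall d, 0 < d -> exists u, I u /\ Rabs (u - s) < d /\ P u) -> P s) ->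
  forall s0 s1, I s0 -> P s0 -> I s1 -> s0 <= s1 -> P s1.
Proof.
  intros Hconv Hop Hcl s0 s1 I0 P0 I1 Hle.
  set (E := fun t => s0 <= t <= s1 /\ forall u, s0 <= u <= t -> P u).
  assert (Eb : bound E). { exists s1. intros t [[_ Ht] _]. auto. }
  assert (Ee : exists t, E t). { exists s0. split. lra. intros u Hu. replace u with s0 by lra. auto. }
  destruct (completeness E Eb Ee) as [sg [Hub Hlub]].
  assert (Hs0 : s0 <= sg) by (apply Hub; destruct Ee; unfold E; split; [lra|]; intros u Hu; replace u with s0 by lra; auto).
  assert (Hs1 : sg <= s1) by (apply Hlub; intros t [[_ Ht] _]; auto).
  assert (Isg : I sg) by (apply (Hconv s0 s1); auto).
  assert (Hlt : forall u, s0 <= u < sg -> P u).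
  { intros u Hu. destruct (Rle_lt_dec sg u) as [?|Hc]; [lra|].
    destruct (classic (exists t, E t /\ u <= t)) as [[t [[_ Ht] Hut]]|Hn].
    - apply Ht. lra.
    - exfalso. assert (sg <= u). { apply Hlub. intros t Et. destruct (Rle_dec t u); auto.
        exfalso. apply Hn. exists t. split; auto. lra. } lra. }
  assert (Psg : P sg).
  { destruct (Req_dec sg s0) as [->|Hne]; auto.
    apply Hcl; auto. intros d Hd.
    set (u := Rmax s0 (sg - d/2)).
    exists u. assert (s0 <= u <= sg). { unfold u, Rmax; destruct Rle_dec; lra. }
    split; [apply (Hconv s0 s1); auto; lra|]. split.
    - unfold u, Rmax; destruct Rle_dec; apply Rabs_def1; lra.
    - apply Hlt. unfold u, Rmax in *; destruct Rle_dec; lra. }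
  destruct (Req_dec sg s1) as [<-|Hne]; auto.
  exfalso. destruct (Hop sg Isg Psg) as [d [Hd Hu]].
  set (t := Rmin s1 (sg + d/2)).
  assert (sg < t) by (unfold t, Rmin; destruct Rle_dec; lra).
  assert (t <= sg).
  { apply Hub. split. unfold t, Rmin; destruct Rle_dec; lra.
    intros u Hu'. destruct (Rlt_le_dec u sg). apply Hlt; lra.
    apply Hu. apply (Hconv s0 s1); auto; unfold t, Rmin in *; destruct Rle_dec; lra.
    unfold t, Rmin in *; destruct Rle_dec; apply Rabs_def1; lra. }
  lra.
Qed.

Lemma clopen_I (a b : Rbar) (P : R -> Prop) :
  (forall s, in_I a b s -> P s -> exists d, 0 < d /\ forall u, in_I a b u -> Rabs (u - s) < d -> P u) ->
  (forall s, in_I a b s -> (forall d, 0 < d -> exists u, in_I a b u /\ Rabs (u - s) < d /\ P u) -> P s) ->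
  forall s0 s1, in_I a b s0 -> P s0 -> in_I a b s1 -> P s1.
Proof.
  intros Hop Hcl s0 s1 I0 P0 I1.
  destruct (Rle_dec s0 s1) as [Hle|Hgt].
  - apply (clopen_right (in_I a b) P) with s0; auto. intros t1 t2 v H1 H2 Hv; apply (in_I_conv a b t1 t2); auto.
  - set (I' := fun v => in_I a b (- v)). set (P' := fun v => P (- v)).
    assert (Hc' : forall t1 t2 v, I' t1 -> I' t2 -> t1 <= v <= t2 -> I' v).
    { intros t1 t2 v H1 H2 Hv. apply (in_I_conv a b (- t2) (- t1)); auto; lra. }
    assert (Ho' : forall s, I' s -> P' s -> exists d, 0 < d /\ forall v, I' v -> Rabs (v - s) < d -> P' v).
    { intros s Is Ps. destruct (Hop (- s) Is Ps) as [d [Hd Hv]]. exists d. split; auto.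
      intros v Iv Hvs. apply Hv; auto. rewrite <- Rabs_Ropp. replace (- (- v - - s)) with (v - s) by ring. auto. }
    assert (Hcl' : forall s, I' s -> (forall d, 0 < d -> exists v, I' v /\ Rabs (v - s) < d /\ P' v) -> P' s).
    { intros s Is H. apply Hcl; auto. intros d Hd. destruct (H d Hd) as [v [Iv [Hvs Pv]]].
      exists (- v). split; auto. split; auto. rewrite <- Rabs_Ropp. replace (- (- v - - s)) with (v - s) by ring. auto. }
    assert (H : P' (- s1)).
    { apply (clopen_right I' P' Hc' Ho' Hcl' (- s0)); unfold I', P'; rewrite ?Ropp_involutive; auto. lra. }
    unfold P' in H. rewrite Ropp_involutive in H. auto.
Qed.


Definition Ck (U : R -> Prop) (n : nat) (f : R -> R) :=
  forall k, (k <= n)%nat -> forall x, U x -> ex_derive_n f k x.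

Lemma Derive_n_S (f : R -> R) k x : Derive_n f (S k) x = Derive_n (Derive f) k x.
Proof.
  replace (S k) with (k + 1)%nat by lia. rewrite <- (Derive_n_comp f k 1).
  apply Derive_n_ext. intro t. reflexivity.
Qed.

Lemma ex_derive_n_S (f : R -> R) k x : ex_derive_n f (S (S k)) x <-> ex_derive_n (Derive f) (S k) x.
Proof.
  simpl. split; apply ex_derive_ext; intro t; [ | symmetry]; apply (Derive_n_S f k t).
Qed.

Lemma Ck_S (U : R -> Prop) n f :
  (forall x, U x -> ex_derive f x) -> Ck U n (Derive f) -> Ck U (S n) f.
Proof.
  intros H1 H2 k Hk x Hx. destruct k as [|k]. exact I.
  destruct k as [|k]. simpl. apply (ex_derive_ext f). reflexivity. auto.
  apply (proj2 (ex_derive_n_S f k x)). apply H2; auto. lia.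
Qed.

Lemma Ck_S_inv (U : R -> Prop) n f :
  Ck U (S n) f -> (forall x, U x -> ex_derive f x) /\ Ck U n (Derive f).
Proof.
  intros H. split.
  - intros x Hx. generalize (H 1%nat ltac:(lia) x Hx). simpl. apply ex_derive_ext. reflexivity.
  - intros k Hk x Hx. destruct k as [|k]. exact I. apply (proj1 (ex_derive_n_S f k x)). apply H; auto. lia.
Qed.

Lemma Ck_le U n m f : (m <= n)%nat -> Ck U n f -> Ck U m f.
Proof. intros H1 H2 k Hk. apply H2. lia. Qed.

Lemma Ck_ext (U : R -> Prop) n f g : open U -> (forall x, U x -> f x = g x) -> Ck U n f -> Ck U n g.
Proof.
  intros Ho He H k Hk x Hx. apply (ex_derive_n_ext_loc f). 
  apply (locally_open _ _ Ho); auto. auto.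
Qed.

Lemma Ck_plus (U : R -> Prop) n f g : open U -> Ck U n f -> Ck U n g -> Ck U n (fun x => f x + g x).
Proof.
  intros Ho Hf Hg k Hk x Hx. apply ex_derive_n_plus.
  - apply (locally_open _ _ Ho); auto. intros y Hy j Hj. apply Hf; auto. lia.
  - apply (locally_open _ _ Ho); auto. intros y Hy j Hj. apply Hg; auto. lia.
Qed.

Lemma Ck_opp (U : R -> Prop) n f : Ck U n f -> Ck U n (fun x => - f x).
Proof. intros Hf k Hk x Hx. apply ex_derive_n_opp. auto. Qed.

Lemma Ck_scal (U : R -> Prop) n a f : Ck U n f -> Ck U n (fun x => a * f x).
Proof. intros Hf k Hk x Hx. apply ex_derive_n_scal_l. auto. Qed.

Lemma Ck_const U n a : Ck U n (fun _ => a).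
Proof. intros k Hk x Hx. apply ex_derive_n_const. Qed.

Lemma Ck_pow U n p : Ck U n (fun x => x ^ p).
Proof. intros k Hk x Hx. apply ex_derive_n_pow. Qed.

Lemma Ck_id U n : Ck U n (fun x => x).
Proof. intros k Hk x Hx. apply (ex_derive_n_ext (fun x => x ^ 1)). intros; simpl; ring. apply ex_derive_n_pow. Qed.

Lemma Ck_mult (U : R -> Prop) n : open U -> forall f g, Ck U n f -> Ck U n g -> Ck U n (fun x => f x * g x).
Proof.
  intros Ho. induction n as [|n IH]; intros f g Hf Hg.
  - intros k Hk x Hx. assert (k = 0%nat) by lia. subst. exact I.
  - apply Ck_S_inv in Hf as [Hf1 Hf2]. apply Ck_S_inv in Hg as [Hg1 Hg2].
    apply Ck_S.
    + intros x Hx. apply ex_derive_mult; auto.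
    + apply (Ck_ext U n (fun x => Derive f x * g x + f x * Derive g x)); auto.
      * intros x Hx. rewrite Derive_mult; auto.
      * apply Ck_plus; auto; apply IH; auto.
        -- apply Ck_le with (S n); auto. apply Ck_S; auto.
        -- apply Ck_le with (S n); auto. apply Ck_S; auto.
Qed.

Lemma Ck_comp (U V : R -> Prop) n : open U -> open V -> forall (psi z : R -> R),
  Ck V n psi -> Ck U n z -> (forall x, U x -> V (z x)) -> Ck U n (fun x => psi (z x)).
Proof.
  intros HoU HoV. induction n as [|n IH]; intros psi z Hp Hz HUV.
  - intros k Hk x Hx. assert (k = 0%nat) by lia. subst. exact I.
  - apply Ck_S_inv in Hp as [Hp1 Hp2]. apply Ck_S_inv in Hz as [Hz1 Hz2].
    apply Ck_S.
    + intros x Hx. apply ex_derive_comp; auto.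
    + apply (Ck_ext U n (fun x => Derive psi (z x) * Derive z x)); auto.
      * intros x Hx. rewrite (Derive_comp psi z x); auto. apply Rmult_comm.
      * apply Ck_mult; auto. apply IH; auto.
        apply Ck_le with (S n); auto. apply Ck_S; auto.
Qed.

Definition Rpos (x : R) := 0 < x.
Lemma open_Rpos : open Rpos.
Proof. apply (open_Rbar_gt (Finite 0)). Qed.

Lemma Ck_inv_id n : Ck Rpos n (fun x => / x).
Proof.
  induction n as [|n IH].
  - intros k Hk x Hx. assert (k = 0%nat) by lia. subst. exact I.
  - apply Ck_S.
    + intros x Hx. unfold Rpos in Hx. auto_derive. lra.
    + apply (Ck_ext Rpos n (fun x => - ((/ x) * (/ x)))). apply open_Rpos.
      * intros x Hx. unfold Rpos in Hx. symmetry; apply is_derive_unique; auto_derive. lra. field. lra.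
      * apply Ck_opp. apply Ck_mult; auto. apply open_Rpos.
Qed.

Lemma Ck_sqrt n : Ck Rpos n sqrt.
Proof.
  induction n as [|n IH].
  - intros k Hk x Hx. assert (k = 0%nat) by lia. subst. exact I.
  - apply Ck_S.
    + intros x Hx. unfold Rpos in Hx. auto_derive. lra.
    + apply (Ck_ext Rpos n (fun x => / 2 * (/ (sqrt x)))). apply open_Rpos.
      * intros x Hx. unfold Rpos in Hx. symmetry; apply is_derive_unique; auto_derive. lra.
        assert (0 < sqrt x) by (apply sqrt_lt_R0; lra). field. lra.
      * apply Ck_scal. apply (Ck_comp Rpos Rpos n open_Rpos open_Rpos (fun x => / x) sqrt);
        [apply Ck_inv_id | exact IH | intros x Hx; apply sqrt_lt_R0; exact Hx].
Qed.

Definition Rall (x : R) := True.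
Lemma open_Rall : open Rall.
Proof. intros x _. exists (mkposreal 1 Rlt_0_1). intros; exact I. Qed.

Lemma Ck_cos_sin n : Ck Rall n cos /\ Ck Rall n sin.
Proof.
  induction n as [|n [IHc IHs]].
  - split; intros k Hk x Hx; assert (k = 0%nat) by lia; subst; exact I.
  - split; apply Ck_S.
    + intros x _. auto_derive. auto.
    + apply (Ck_ext Rall n (fun x => - sin x)). apply open_Rall.
      intros x _. symmetry; apply is_derive_unique; auto_derive; auto. ring. apply Ck_opp; auto.
    + intros x _. auto_derive. auto.
    + apply (Ck_ext Rall n cos). apply open_Rall.
      intros x _. symmetry; apply is_derive_unique; auto_derive; auto. ring. auto.
Qed.

Lemma Ck_inv (U : R -> Prop) n f : open U -> Ck U n f -> (forall x, U x -> 0 < f x) -> Ck U n (fun x => / f x).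
Proof. intros Ho Hf Hp. apply (Ck_comp U Rpos n Ho open_Rpos (fun x => / x) f); auto. apply Ck_inv_id. Qed.

Lemma Ck_sqrt_f (U : R -> Prop) n f : open U -> Ck U n f -> (forall x, U x -> 0 < f x) -> Ck U n (fun x => sqrt (f x)).
Proof. intros Ho Hf Hp. apply (Ck_comp U Rpos n Ho open_Rpos sqrt f); auto. apply Ck_sqrt. Qed.

Lemma Ck_cos_f (U : R -> Prop) n f : open U -> Ck U n f -> Ck U n (fun x => cos (f x)).
Proof. intros Ho Hf. apply (Ck_comp U Rall n Ho open_Rall cos f); auto. apply Ck_cos_sin. intros; exact I. Qed.
Lemma Ck_sin_f (U : R -> Prop) n f : open U -> Ck U n f -> Ck U n (fun x => sin (f x)).
Proof. intros Ho Hf. apply (Ck_comp U Rall n Ho open_Rall sin f); auto. apply Ck_cos_sin. intros; exact I. Qed.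

Lemma Ck_deriv (U : R -> Prop) n f g : open U ->
  (forall x, U x -> is_derive f x (g x)) -> Ck U n g -> Ck U (S n) f.
Proof.
  intros Ho Hd Hg. apply Ck_S.
  - intros x Hx. exists (g x). auto.
  - apply (Ck_ext U n g); auto. intros x Hx. symmetry. apply is_derive_unique. auto.
Qed.

Lemma Ck_minus (U : R -> Prop) n f g : open U -> Ck U n f -> Ck U n g -> Ck U n (fun x => f x - g x).
Proof. intros Ho Hf Hg. unfold Rminus. apply Ck_plus; auto. apply Ck_opp; auto. Qed.

Lemma Ck_pow_f (U : R -> Prop) n f k : open U -> Ck U n f -> Ck U n (fun x => f x ^ k).
Proof. intros Ho Hf. apply (Ck_comp U Rall n Ho open_Rall (fun x => x ^ k) f); auto. apply Ck_pow. intros; exact I. Qed.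

Ltac ck HoU :=
  match goal with
  | |- Ck ?U ?n (fun w => @?A w + @?B w) => apply (Ck_plus U n A B HoU); ck HoU
  | |- Ck ?U ?n (fun w => @?A w - @?B w) => apply (Ck_minus U n A B HoU); ck HoU
  | |- Ck ?U ?n (fun w => @?A w * @?B w) => apply (Ck_mult U n HoU A B); ck HoU
  | |- Ck ?U ?n (fun w => - @?A w) => apply (Ck_opp U n A); ck HoU
  | |- Ck ?U ?n (fun w => / @?A w) => apply (Ck_inv U n A HoU); [ck HoU | ]
  | |- Ck ?U ?n (fun w => sqrt (@?A w)) => apply (Ck_sqrt_f U n A HoU); [ck HoU | ]
  | |- Ck ?U ?n (fun w => cos (@?A w)) => apply (Ck_cos_f U n A HoU); ck HoU
  | |- Ck ?U ?n (fun w => sin (@?A w)) => apply (Ck_sin_f U n A HoU); ck HoU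
  | |- Ck ?U ?n (fun w => w ^ ?k) => apply (Ck_pow U n k)
  | |- Ck ?U ?n (fun w => w) => apply (Ck_id U n)
  | |- Ck ?U ?n (fun w => (@?A w) ^ ?k) => apply (Ck_pow_f U n A k HoU); ck HoU
  | |- Ck ?U ?n (fun w => ?c) => apply (Ck_const U n c)
  | |- Ck ?U ?n (fun w => @?A w / @?B w) => apply (Ck_mult U n HoU A (fun w => / B w)); ck HoU
  | _ => idtac
  end.


Lemma frame3 x y z p q r v1 v2 v3 :
  x*x+y*y+z*z = 1 -> x*p+y*q+z*r = 0 -> p*p+q*q+r*r = 1 ->
  let n1 := y*r - z*q in let n2 := z*p - x*r in let n3 := x*q - y*p in
  let al := v1*x+v2*y+v3*z in let be := v1*p+v2*q+v3*r in let ga := v1*n1+v2*n2+v3*n3 in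
  v1 = al*x + be*p + ga*n1 /\ v2 = al*y + be*q + ga*n2 /\ v3 = al*z + be*r + ga*n3.
Proof.
  intros c1 c2 c3 n1 n2 n3 al be ga.
  set (e1 := v1 - (al*x + be*p + ga*n1)).
  set (e2 := v2 - (al*y + be*q + ga*n2)).
  set (e3 := v3 - (al*z + be*r + ga*n3)).
  assert (Hn : n1*n1+n2*n2+n3*n3 = (x*x+y*y+z*z)*(p*p+q*q+r*r) - (x*p+y*q+z*r)^2)
    by (unfold n1, n2, n3; ring).
  rewrite c1, c2, c3 in Hn.
  assert (E1 : e1*x+e2*y+e3*z = al*(1 - (x*x+y*y+z*z)) - be*(x*p+y*q+z*r))
    by (unfold e1, e2, e3, al, be, ga, n1, n2, n3; ring).
  rewrite c1, c2 in E1.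
  assert (E2 : e1*p+e2*q+e3*r = be*(1 - (p*p+q*q+r*r)) - al*(x*p+y*q+z*r))
    by (unfold e1, e2, e3, al, be, ga, n1, n2, n3; ring).
  rewrite c3, c2 in E2.
  assert (E3 : e1*n1+e2*n2+e3*n3 = ga*(1 - (n1*n1+n2*n2+n3*n3)))
    by (unfold e1, e2, e3, al, be, ga, n1, n2, n3; ring).
  rewrite Hn in E3.
  assert (Lg : (n1*n1+n2*n2+n3*n3)*(e1*e1+e2*e2+e3*e3) =
     (e1*n1+e2*n2+e3*n3)^2 + (n2*e3-n3*e2)^2 + (n3*e1-n1*e3)^2 + (n1*e2-n2*e1)^2) by ring.
  assert (C1 : n2*e3-n3*e2 = p*(e1*x+e2*y+e3*z) - x*(e1*p+e2*q+e3*r)) by (unfold n1,n2,n3; ring).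
  assert (C2 : n3*e1-n1*e3 = q*(e1*x+e2*y+e3*z) - y*(e1*p+e2*q+e3*r)) by (unfold n1,n2,n3; ring).
  assert (C3 : n1*e2-n2*e1 = r*(e1*x+e2*y+e3*z) - z*(e1*p+e2*q+e3*r)) by (unfold n1,n2,n3; ring).
  rewrite C1, C2, C3, Hn, E1, E2, E3 in Lg.
  assert (Z : e1*e1+e2*e2+e3*e3 = 0) by lra.
  assert (e1 = 0) by nra. assert (e2 = 0) by nra. assert (e3 = 0) by nra.
  unfold e1, e2, e3 in *. repeat split; lra.
Qed.

Lemma dot3_eq L1 L2 L3 R1 R2 R3 n1 n2 n3 : L1 = R1 -> L2 = R2 -> L3 = R3 ->
  L1*n1+L2*n2+L3*n3 = R1*n1+R2*n2+R3*n3.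
Proof. intros H1 H2 H3. rewrite H1, H2, H3. reflexivity. Qed.

Definition comb (G F E : R) (uss ust utt : R4) : R4 :=
  r4_add (r4_add (r4_scal G uss) (r4_scal (- (2 * F)) ust)) (r4_scal E utt).

Definition Kf x y p q := p*y - x*q.
Definition kap x y z p q r P1 Q1 R1 := P1*(y*r - z*q) + Q1*(z*p - x*r) + R1*(x*q - y*p).
Definition Mf h x y z p q r P1 Q1 R1 :=
  z*(h^2*(1-z^2)+z^2)*kap x y z p q r P1 Q1 R1 + Kf x y p q*(z^2*(1+h^2) + 2*h^2*r^2).

Lemma span0 h x y z p q r P1 Q1 R1 :
  x*x+y*y+z*z = 1 -> x*p+y*q+z*r = 0 -> p*p+q*q+r*r = 1 -> 0 < z ->
  let u0 := mkR4 x y z 0 in let us := mkR4 p q r 0 in let ut := mkR4 (-h*y) (h*x) 0 z in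
  let uss := mkR4 P1 Q1 R1 0 in let ust := mkR4 (-h*q) (h*p) 0 r in
  let utt := mkR4 (-h^2*x) (-h^2*y) (-z) 0 in
  ((exists a b c, comb (r4_dot ut ut) (r4_dot us ut) (r4_dot us us) uss ust utt =
                 r4_add (r4_add (r4_scal a us) (r4_scal b ut)) (r4_scal c u0))
   <-> Mf h x y z p q r P1 Q1 R1 = 0).
Proof.
  intros c1 c2 c3 zp u0 us ut uss ust utt.
  assert (HE : r4_dot us us = 1) by (unfold us, r4_dot; simpl; lra).
  assert (HF : r4_dot us ut = - h * Kf x y p q) by (unfold us, ut, r4_dot, Kf; simpl; ring).
  assert (HG : r4_dot ut ut = h^2*(1-z^2)+z^2).
  { unfold ut, r4_dot; simpl. transitivity (h^2*(x*x+y*y)+z*z). ring. replace (x*x+y*y) with (1-z*z) by lra. ring. }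
  rewrite HE, HF, HG.
  set (G := h^2*(1-z^2)+z^2). set (K := Kf x y p q).
  set (n1 := y*r - z*q). set (n2 := z*p - x*r). set (n3 := x*q - y*p).
  set (ka := kap x y z p q r P1 Q1 R1).
  assert (D1 : (-h*q)*n1 + (h*p)*n2 = h*z).
  { unfold n1, n2. replace ((-h*q)*(y*r-z*q) + (h*p)*(z*p-x*r)) with
      (h*(z*(p*p+q*q) - r*(x*p+y*q))) by ring.
    replace (p*p+q*q) with (1-r*r) by lra. replace (x*p+y*q) with (-(z*r)) by lra. ring. }
  assert (D2 : (-h^2*x)*n1 + (-h^2*y)*n2 + (-z)*n3 = z*K*(1-h^2)).
  { unfold n1, n2, n3, K, Kf. ring. }
  assert (D3 : (-h*y)*n1 + (h*x)*n2 = -h*r).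
  { unfold n1, n2. replace ((-h*y)*(y*r-z*q) + (h*x)*(z*p-x*r)) with
      (h*(- r*(x*x+y*y) + z*(x*p+y*q))) by ring.
    replace (x*x+y*y) with (1-z*z) by lra. replace (x*p+y*q) with (-(z*r)) by lra. ring. }
  assert (D4 : x*n1 + y*n2 + z*n3 = 0) by (unfold n1, n2, n3; ring).
  assert (D5 : p*n1 + q*n2 + r*n3 = 0) by (unfold n1, n2, n3; ring).
  assert (Hka : ka = P1*n1+Q1*n2+R1*n3) by reflexivity.
  unfold Mf. fold ka. fold K. fold G.
  split.
  - intros [a [b [c Heq]]].
    unfold comb, r4_add, r4_scal, us, ut, u0, uss, ust, utt in Heq. cbn [r4_1 r4_2 r4_3 r4_4] in Heq.
    injection Heq as H1 H2 H3 H4.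
    assert (Hb : b * z = 2*h*K*r) by lra.
    pose proof (dot3_eq _ _ _ _ _ _ n1 n2 n3 H1 H2 H3) as Hdot.
    assert (L : (G*P1 + -(2*(-h*K))*(-h*q) + 1*(-h^2*x))*n1 + (G*Q1 + -(2*(-h*K))*(h*p) + 1*(-h^2*y))*n2
                   + (G*R1 + -(2*(-h*K))*0 + 1*(-z))*n3
               = G*ka + 2*h*K*((-h*q)*n1 + (h*p)*n2) + ((-h^2*x)*n1 + (-h^2*y)*n2 + (-z)*n3))
      by (rewrite Hka; ring).
    assert (Rr : (a*p + b*(-h*y) + c*x)*n1 + (a*q + b*(h*x) + c*y)*n2 + (a*r+b*0+c*z)*n3
               = a*(p*n1+q*n2+r*n3) + b*((-h*y)*n1 + (h*x)*n2) + c*(x*n1+y*n2+z*n3)) by ring.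
    rewrite D1, D2 in L. rewrite D3, D4, D5 in Rr.
    assert (S1 : G*ka + 2*h*K*(h*z) + z*K*(1-h^2) = b*(-h*r)) by lra.
    assert (T : z*(G*ka + 2*h*K*(h*z) + z*K*(1-h^2)) = z*(b*(-h*r))) by (rewrite S1; reflexivity).
    assert (T2 : z*(b*(-h*r)) = -h*r*(b*z)) by ring. rewrite Hb in T2.
    lra.
  - intros HM.
    set (b := 2*h*K*r/z).
    set (v1 := G*P1 + -(2*(-h*K))*(-h*q) + 1*(-h^2*x) - b*(-h*y)).
    set (v2 := G*Q1 + -(2*(-h*K))*(h*p) + 1*(-h^2*y) - b*(h*x)).
    set (v3 := G*R1 + -(2*(-h*K))*0 + 1*(-z) - b*0).
    destruct (frame3 x y z p q r v1 v2 v3 c1 c2 c3) as [F1 [F2 F3]].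
    fold n1 n2 n3 in F1, F2, F3.
    set (ga := v1*n1+v2*n2+v3*n3) in *.
    assert (Hga : ga = 0).
    { assert (Eg : ga = G*ka + 2*h*K*((-h*q)*n1 + (h*p)*n2) + ((-h^2*x)*n1 + (-h^2*y)*n2 + (-z)*n3)
                        - b*((-h*y)*n1 + (h*x)*n2)).
      { unfold ga, v1, v2, v3. rewrite Hka. ring. }
      rewrite Eg, D1, D2, D3. unfold b.
      apply (Rmult_eq_reg_l z); [|lra]. rewrite Rmult_0_r. rewrite <- HM. field. lra. }
    rewrite Hga in F1, F2, F3.
    exists (v1*p+v2*q+v3*r), b, (v1*x+v2*y+v3*z).
    unfold comb, r4_add, r4_scal, us, ut, u0, uss, ust, utt. cbn [r4_1 r4_2 r4_3 r4_4].
    f_equal.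
    + unfold v1 in F1 at 1. lra.
    + unfold v2 in F2 at 1. lra.
    + unfold v3 in F3 at 1. lra.
    + unfold b. field. lra.
Qed.


Definition Rt (h t : R) (u : R4) : R4 :=
  mkR4 (r4_1 u * cos (h*t) - r4_2 u * sin (h*t)) (r4_1 u * sin (h*t) + r4_2 u * cos (h*t))
       (r4_3 u * cos t - r4_4 u * sin t) (r4_3 u * sin t + r4_4 u * cos t).

Lemma Rt_dot h t u v : r4_dot (Rt h t u) (Rt h t v) = r4_dot u v.
Proof.
  unfold Rt, r4_dot; cbn [r4_1 r4_2 r4_3 r4_4].
  pose proof (sin2_cos2 (h*t)) as A. pose proof (sin2_cos2 t) as B. unfold Rsqr in A, B.
  transitivity ((r4_1 u * r4_1 v + r4_2 u * r4_2 v)*(sin (h*t) * sin (h*t) + cos (h*t) * cos (h*t))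
    + (r4_3 u * r4_3 v + r4_4 u * r4_4 v)*(sin t * sin t + cos t * cos t)). ring.
  rewrite A, B. ring.
Qed.

Lemma Rt_comb h t G F E a b c us ut u0 uss ust utt :
  comb G F E uss ust utt = r4_add (r4_add (r4_scal a us) (r4_scal b ut)) (r4_scal c u0) ->
  comb G F E (Rt h t uss) (Rt h t ust) (Rt h t utt) =
  r4_add (r4_add (r4_scal a (Rt h t us)) (r4_scal b (Rt h t ut))) (r4_scal c (Rt h t u0)).
Proof.
  unfold comb, Rt, r4_add, r4_scal. intros H. injection H as H1 H2 H3 H4.
  cbn [r4_1 r4_2 r4_3 r4_4] in *. f_equal.
  - transitivity ((G * r4_1 uss + - (2 * F) * r4_1 ust + E * r4_1 utt) * cos (h*t)
       - (G * r4_2 uss + - (2 * F) * r4_2 ust + E * r4_2 utt) * sin (h*t)). ring.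
    rewrite H1, H2. ring.
  - transitivity ((G * r4_1 uss + - (2 * F) * r4_1 ust + E * r4_1 utt) * sin (h*t)
       + (G * r4_2 uss + - (2 * F) * r4_2 ust + E * r4_2 utt) * cos (h*t)). ring.
    rewrite H1, H2. ring.
  - transitivity ((G * r4_3 uss + - (2 * F) * r4_3 ust + E * r4_3 utt) * cos t
       - (G * r4_4 uss + - (2 * F) * r4_4 ust + E * r4_4 utt) * sin t). ring.
    rewrite H3, H4. ring.
  - transitivity ((G * r4_3 uss + - (2 * F) * r4_3 ust + E * r4_3 utt) * sin t
       + (G * r4_4 uss + - (2 * F) * r4_4 ust + E * r4_4 utt) * cos t). ring.
    rewrite H3, H4. ring.
Qed.

Lemma Rt_0 h u : Rt h 0 u = u.
Proof.
  destruct u as [u1 u2 u3 u4]. unfold Rt. cbn [r4_1 r4_2 r4_3 r4_4].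
  rewrite Rmult_0_r, cos_0, sin_0. f_equal; ring.
Qed.

Section Curve.
Variables (a b : Rbar) (x y z : R -> R).
Hypothesis Hc : profile_curve a b x y z.

Lemma cd1 f s : (forall n, ex_derive_n f n s) -> ex_derive f s /\ ex_derive (Derive f) s /\ ex_derive (Derive (Derive f)) s.
Proof.
  intros H. split; [|split].
  - generalize (H 1%nat). simpl. apply ex_derive_ext. reflexivity.
  - generalize (H 2%nat). simpl. apply ex_derive_ext. intro t. apply Derive_ext. reflexivity.
  - generalize (H 3%nat). simpl. apply ex_derive_ext. intro t. apply Derive_ext. intro. apply Derive_ext. reflexivity.
Qed.

Lemma cdx s : in_I a b s -> ex_derive x s /\ ex_derive (Derive x) s /\ ex_derive (Derive (Derive x)) s.
Proof. intros Hs. destruct Hc as [_ H]. apply cd1. intro n. apply (H s Hs). Qed.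
Lemma cdy s : in_I a b s -> ex_derive y s /\ ex_derive (Derive y) s /\ ex_derive (Derive (Derive y)) s.
Proof. intros Hs. destruct Hc as [_ H]. apply cd1. intro n. apply (H s Hs). Qed.
Lemma cdz s : in_I a b s -> ex_derive z s /\ ex_derive (Derive z) s /\ ex_derive (Derive (Derive z)) s.
Proof. intros Hs. destruct Hc as [_ H]. apply cd1. intro n. apply (H s Hs). Qed.

Lemma c1 s : in_I a b s -> x s * x s + y s * y s + z s * z s = 1.
Proof. intros Hs. destruct Hc as [_ H]. destruct (H s Hs) as [_ [E _]]. nra. Qed.
Lemma c3 s : in_I a b s -> Derive x s * Derive x s + Derive y s * Derive y s + Derive z s * Derive z s = 1.
Proof. intros Hs. destruct Hc as [_ H]. destruct (H s Hs) as [_ [_ [_ E]]]. nra. Qed.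
Lemma zpos s : in_I a b s -> 0 < z s.
Proof. intros Hs. destruct Hc as [_ H]. destruct (H s Hs) as [_ [_ [E _]]]. exact E. Qed.

Lemma c2 s : in_I a b s -> x s * Derive x s + y s * Derive y s + z s * Derive z s = 0.
Proof.
  intros Hs.
  destruct (cdx s Hs) as [X1 _]. destruct (cdy s Hs) as [Y1 _]. destruct (cdz s Hs) as [Z1 _].
  assert (D : is_derive (fun u => x u * x u + y u * y u + z u * z u - 1) s
      (2 * (x s * Derive x s + y s * Derive y s + z s * Derive z s))).
  { auto_derive. repeat split; auto. fixeta. ring. }
  apply (deriv_zero_fun a b) in D; auto. lra.
  intros u Hu. rewrite c1; auto. ring.
Qed.

Lemma c5 s : in_I a b s -> Derive x s * Derive (Derive x) s + Derive y s * Derive (Derive y) s + Derive z s * Derive (Derive z) s = 0.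
Proof.
  intros Hs.
  destruct (cdx s Hs) as [_ [X1 _]]. destruct (cdy s Hs) as [_ [Y1 _]]. destruct (cdz s Hs) as [_ [Z1 _]].
  assert (D : is_derive (fun u => Derive x u * Derive x u + Derive y u * Derive y u + Derive z u * Derive z u - 1) s
      (2 * (Derive x s * Derive (Derive x) s + Derive y s * Derive (Derive y) s + Derive z s * Derive (Derive z) s))).
  { auto_derive. repeat split; auto. fixeta. ring. }
  apply (deriv_zero_fun a b) in D; auto. lra.
  intros u Hu. rewrite c3; auto. ring.
Qed.

Lemma c4 s : in_I a b s -> x s * Derive (Derive x) s + y s * Derive (Derive y) s + z s * Derive (Derive z) s = -1.
Proof.
  intros Hs.
  destruct (cdx s Hs) as [X0 [X1 _]]. destruct (cdy s Hs) as [Y0 [Y1 _]]. destruct (cdz s Hs) as [Z0 [Z1 _]].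
  assert (D : is_derive (fun u => x u * Derive x u + y u * Derive y u + z u * Derive z u) s
      ((Derive x s * Derive x s + Derive y s * Derive y s + Derive z s * Derive z s) +
       (x s * Derive (Derive x) s + y s * Derive (Derive y) s + z s * Derive (Derive z) s))).
  { auto_derive. repeat split; auto. fixeta. ring. }
  apply (deriv_zero_fun a b) in D; auto. rewrite c3 in D; auto. lra.
  intros u Hu. apply c2; auto.
Qed.

End Curve.

Lemma pd1_def F s t : pd1 F s t = mkR4 (Derive (fun u => r4_1 (F u t)) s) (Derive (fun u => r4_2 (F u t)) s)
       (Derive (fun u => r4_3 (F u t)) s) (Derive (fun u => r4_4 (F u t)) s).
Proof. reflexivity. Qed.
Lemma pd2_def F s t : pd2 F s t = mkR4 (Derive (fun u => r4_1 (F s u)) t) (Derive (fun u => r4_2 (F s u)) t)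
       (Derive (fun u => r4_3 (F s u)) t) (Derive (fun u => r4_4 (F s u)) t).
Proof. reflexivity. Qed.

Section Surf.
Variables (a b : Rbar) (x y z : R -> R) (h : R).
Hypothesis Hc : profile_curve a b x y z.
Let X := helicoidal h x y z.

Lemma hel_Rt s t : X s t = Rt h t (mkR4 (x s) (y s) (z s) 0).
Proof. unfold X, helicoidal, Rt. cbn [r4_1 r4_2 r4_3 r4_4]. f_equal; ring. Qed.

Lemma pd1_hel s t : in_I a b s -> pd1 X s t = Rt h t (mkR4 (Derive x s) (Derive y s) (Derive z s) 0).
Proof.
  intros Hs. destruct (cdx a b x y z Hc s Hs) as [X0 _]. destruct (cdy a b x y z Hc s Hs) as [Y0 _].
  destruct (cdz a b x y z Hc s Hs) as [Z0 _].
  rewrite pd1_def. unfold X, helicoidal, Rt. cbn [r4_1 r4_2 r4_3 r4_4].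
  f_equal; apply is_derive_unique; auto_derive; auto; fixeta; ring.
Qed.

Lemma pd2_hel s t : pd2 X s t = Rt h t (mkR4 (-h * y s) (h * x s) 0 (z s)).
Proof.
  rewrite pd2_def. unfold X, helicoidal, Rt. cbn [r4_1 r4_2 r4_3 r4_4].
  f_equal; apply is_derive_unique; auto_derive; auto; ring.
Qed.

Lemma pd11_hel s t : in_I a b s ->
  pd1 (pd1 X) s t = Rt h t (mkR4 (Derive (Derive x) s) (Derive (Derive y) s) (Derive (Derive z) s) 0).
Proof.
  intros Hs. destruct (cdx a b x y z Hc s Hs) as [_ [X1 _]]. destruct (cdy a b x y z Hc s Hs) as [_ [Y1 _]].
  destruct (cdz a b x y z Hc s Hs) as [_ [Z1 _]].
  rewrite (pd1_def (pd1 X)).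
  assert (L : locally s (fun u => pd1 X u t = Rt h t (mkR4 (Derive x u) (Derive y u) (Derive z u) 0))).
  { apply (locally_open _ _ (in_I_open a b)); auto. intros u Hu. apply pd1_hel; auto. }
  unfold Rt. cbn [r4_1 r4_2 r4_3 r4_4]. f_equal.
  - rewrite (Derive_ext_loc _ (fun u => Derive x u * cos (h*t) - Derive y u * sin (h*t))).
    apply is_derive_unique; auto_derive; auto; fixeta; ring.
    revert L. apply filter_imp. intros u ->. reflexivity.
  - rewrite (Derive_ext_loc _ (fun u => Derive x u * sin (h*t) + Derive y u * cos (h*t))).
    apply is_derive_unique; auto_derive; auto; fixeta; ring.
    revert L. apply filter_imp. intros u ->. reflexivity.
  - rewrite (Derive_ext_loc _ (fun u => Derive z u * cos t - 0 * sin t)).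
    apply is_derive_unique; auto_derive; auto; fixeta; ring.
    revert L. apply filter_imp. intros u ->. reflexivity.
  - rewrite (Derive_ext_loc _ (fun u => Derive z u * sin t + 0 * cos t)).
    apply is_derive_unique; auto_derive; auto; fixeta; ring.
    revert L. apply filter_imp. intros u ->. reflexivity.
Qed.

Lemma pd21_hel s t : in_I a b s ->
  pd2 (pd1 X) s t = Rt h t (mkR4 (-h * Derive y s) (h * Derive x s) 0 (Derive z s)).
Proof.
  intros Hs. rewrite (pd2_def (pd1 X)).
  assert (L : forall u, pd1 X s u = Rt h u (mkR4 (Derive x s) (Derive y s) (Derive z s) 0)).
  { intros u. apply pd1_hel; auto. }
  unfold Rt. cbn [r4_1 r4_2 r4_3 r4_4]. f_equal.
  - rewrite (Derive_ext _ (fun u => Derive x s * cos (h*u) - Derive y s * sin (h*u))).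
    apply is_derive_unique; auto_derive; auto; ring. intro u. rewrite L. reflexivity.
  - rewrite (Derive_ext _ (fun u => Derive x s * sin (h*u) + Derive y s * cos (h*u))).
    apply is_derive_unique; auto_derive; auto; ring. intro u. rewrite L. reflexivity.
  - rewrite (Derive_ext _ (fun u => Derive z s * cos u - 0 * sin u)).
    apply is_derive_unique; auto_derive; auto; ring. intro u. rewrite L. reflexivity.
  - rewrite (Derive_ext _ (fun u => Derive z s * sin u + 0 * cos u)).
    apply is_derive_unique; auto_derive; auto; ring. intro u. rewrite L. reflexivity.
Qed.

Lemma pd22_hel s t :
  pd2 (pd2 X) s t = Rt h t (mkR4 (-h^2 * x s) (-h^2 * y s) (- z s) 0).
Proof.
  rewrite (pd2_def (pd2 X)).
  assert (L : forall u, pd2 X s u = Rt h u (mkR4 (-h * y s) (h * x s) 0 (z s))).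
  { intros u. apply pd2_hel; auto. }
  unfold Rt. cbn [r4_1 r4_2 r4_3 r4_4]. f_equal.
  - rewrite (Derive_ext _ (fun u => (-h * y s) * cos (h*u) - (h * x s) * sin (h*u))).
    apply is_derive_unique; auto_derive; auto; ring. intro u. rewrite L. reflexivity.
  - rewrite (Derive_ext _ (fun u => (-h * y s) * sin (h*u) + (h * x s) * cos (h*u))).
    apply is_derive_unique; auto_derive; auto; ring. intro u. rewrite L. reflexivity.
  - rewrite (Derive_ext _ (fun u => 0 * cos u - z s * sin u)).
    apply is_derive_unique; auto_derive; auto; ring. intro u. rewrite L. reflexivity.
  - rewrite (Derive_ext _ (fun u => 0 * sin u + z s * cos u)).
    apply is_derive_unique; auto_derive; auto; ring. intro u. rewrite L. reflexivity.
Qed.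

End Surf.

Section Surf2.
Variables (a b : Rbar) (x y z : R -> R) (h : R).
Hypothesis Hc : profile_curve a b x y z.
Let X := helicoidal h x y z.

Lemma comp_cases (P : nat -> Prop) : P 0%nat -> P 1%nat -> P 2%nat -> P 3%nat -> forall i, (i < 4)%nat -> P i.
Proof. intros H0 H1 H2 H3 i Hi. destruct i as [|[|[|[|i]]]]; auto; lia. Qed.

Lemma exp_X s t : in_I a b s -> ex_partials X s t.
Proof.
  intros Hs. destruct (cdx a b x y z Hc s Hs) as [X0 _]. destruct (cdy a b x y z Hc s Hs) as [Y0 _].
  destruct (cdz a b x y z Hc s Hs) as [Z0 _].
  intros i Hi; destruct i as [|[|[|[|i]]]]; try lia; unfold X, helicoidal; cbn [r4_comp r4_1 r4_2 r4_3 r4_4]; split; auto_derive; auto.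
Qed.

Lemma exp_X1 s t : in_I a b s -> ex_partials (pd1 X) s t.
Proof.
  intros Hs. destruct (cdx a b x y z Hc s Hs) as [_ [X1 _]]. destruct (cdy a b x y z Hc s Hs) as [_ [Y1 _]].
  destruct (cdz a b x y z Hc s Hs) as [_ [Z1 _]].
  assert (L : locally s (fun u => pd1 X u t = Rt h t (mkR4 (Derive x u) (Derive y u) (Derive z u) 0))).
  { apply (locally_open _ _ (in_I_open a b)); auto. intros u Hu. apply (pd1_hel a b x y z h Hc); auto. }
  assert (L2 : forall u, pd1 X s u = Rt h u (mkR4 (Derive x s) (Derive y s) (Derive z s) 0)).
  { intros u. apply (pd1_hel a b x y z h Hc); auto. }
  intros i Hi; destruct i as [|[|[|[|i]]]]; try lia; cbn [r4_comp]; split.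
  - apply (ex_derive_ext_loc (fun u => r4_1 (Rt h t (mkR4 (Derive x u) (Derive y u) (Derive z u) 0)))).
    revert L. apply filter_imp. intros u ->. reflexivity. unfold Rt; cbn [r4_1 r4_2 r4_3 r4_4]. auto_derive; auto.
  - apply (ex_derive_ext (fun u => r4_1 (Rt h u (mkR4 (Derive x s) (Derive y s) (Derive z s) 0)))).
    intro u. rewrite L2. reflexivity. unfold Rt; cbn [r4_1 r4_2 r4_3 r4_4]. auto_derive; auto.
  - apply (ex_derive_ext_loc (fun u => r4_2 (Rt h t (mkR4 (Derive x u) (Derive y u) (Derive z u) 0)))).
    revert L. apply filter_imp. intros u ->. reflexivity. unfold Rt; cbn [r4_1 r4_2 r4_3 r4_4]. auto_derive; auto.
  - apply (ex_derive_ext (fun u => r4_2 (Rt h u (mkR4 (Derive x s) (Derive y s) (Derive z s) 0)))).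
    intro u. rewrite L2. reflexivity. unfold Rt; cbn [r4_1 r4_2 r4_3 r4_4]. auto_derive; auto.
  - apply (ex_derive_ext_loc (fun u => r4_3 (Rt h t (mkR4 (Derive x u) (Derive y u) (Derive z u) 0)))).
    revert L. apply filter_imp. intros u ->. reflexivity. unfold Rt; cbn [r4_1 r4_2 r4_3 r4_4]. auto_derive; auto.
  - apply (ex_derive_ext (fun u => r4_3 (Rt h u (mkR4 (Derive x s) (Derive y s) (Derive z s) 0)))).
    intro u. rewrite L2. reflexivity. unfold Rt; cbn [r4_1 r4_2 r4_3 r4_4]. auto_derive; auto.
  - apply (ex_derive_ext_loc (fun u => r4_4 (Rt h t (mkR4 (Derive x u) (Derive y u) (Derive z u) 0)))).
    revert L. apply filter_imp. intros u ->. reflexivity. unfold Rt; cbn [r4_1 r4_2 r4_3 r4_4]. auto_derive; auto.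
  - apply (ex_derive_ext (fun u => r4_4 (Rt h u (mkR4 (Derive x s) (Derive y s) (Derive z s) 0)))).
    intro u. rewrite L2. reflexivity. unfold Rt; cbn [r4_1 r4_2 r4_3 r4_4]. auto_derive; auto.
Qed.

Lemma exp_X2 s t : in_I a b s -> ex_partials (pd2 X) s t.
Proof.
  intros Hs. destruct (cdx a b x y z Hc s Hs) as [X0 _]. destruct (cdy a b x y z Hc s Hs) as [Y0 _].
  destruct (cdz a b x y z Hc s Hs) as [Z0 _].
  assert (L : forall u v, pd2 X u v = Rt h v (mkR4 (-h * y u) (h * x u) 0 (z u))).
  { intros u v. apply (pd2_hel x y z h). }
  intros i Hi; destruct i as [|[|[|[|i]]]]; try lia; cbn [r4_comp]; split.
  - apply (ex_derive_ext (fun u => r4_1 (Rt h t (mkR4 (-h * y u) (h * x u) 0 (z u))))).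
    intro u. rewrite L. reflexivity. unfold Rt; cbn [r4_1 r4_2 r4_3 r4_4]. auto_derive; auto.
  - apply (ex_derive_ext (fun u => r4_1 (Rt h u (mkR4 (-h * y s) (h * x s) 0 (z s))))).
    intro u. rewrite L. reflexivity. unfold Rt; cbn [r4_1 r4_2 r4_3 r4_4]. auto_derive; auto.
  - apply (ex_derive_ext (fun u => r4_2 (Rt h t (mkR4 (-h * y u) (h * x u) 0 (z u))))).
    intro u. rewrite L. reflexivity. unfold Rt; cbn [r4_1 r4_2 r4_3 r4_4]. auto_derive; auto.
  - apply (ex_derive_ext (fun u => r4_2 (Rt h u (mkR4 (-h * y s) (h * x s) 0 (z s))))).
    intro u. rewrite L. reflexivity. unfold Rt; cbn [r4_1 r4_2 r4_3 r4_4]. auto_derive; auto.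
  - apply (ex_derive_ext (fun u => r4_3 (Rt h t (mkR4 (-h * y u) (h * x u) 0 (z u))))).
    intro u. rewrite L. reflexivity. unfold Rt; cbn [r4_1 r4_2 r4_3 r4_4]. auto_derive; auto.
  - apply (ex_derive_ext (fun u => r4_3 (Rt h u (mkR4 (-h * y s) (h * x s) 0 (z s))))).
    intro u. rewrite L. reflexivity. unfold Rt; cbn [r4_1 r4_2 r4_3 r4_4]. auto_derive; auto.
  - apply (ex_derive_ext (fun u => r4_4 (Rt h t (mkR4 (-h * y u) (h * x u) 0 (z u))))).
    intro u. rewrite L. reflexivity. unfold Rt; cbn [r4_1 r4_2 r4_3 r4_4]. auto_derive; auto.
  - apply (ex_derive_ext (fun u => r4_4 (Rt h u (mkR4 (-h * y s) (h * x s) 0 (z s))))).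
    intro u. rewrite L. reflexivity. unfold Rt; cbn [r4_1 r4_2 r4_3 r4_4]. auto_derive; auto.
Qed.

Definition Ms s := Mf h (x s) (y s) (z s) (Derive x s) (Derive y s) (Derive z s)
   (Derive (Derive x) s) (Derive (Derive y) s) (Derive (Derive z) s).

Lemma minimal_iff : minimal_in_S3 (strip a b) X <-> forall s, in_I a b s -> Ms s = 0.
Proof.
  split.
  - intros Hm s Hs. destruct (Hm s 0 Hs) as [_ [_ [_ [_ [_ Habc]]]]].
    rewrite (pd1_hel a b x y z h Hc), (pd2_hel x y z h), (pd11_hel a b x y z h Hc), (pd21_hel a b x y z h Hc), (pd22_hel x y z h), (hel_Rt x y z h) in Habc; auto.
    rewrite !Rt_0 in Habc.
    pose proof (span0 h (x s) (y s) (z s) (Derive x s) (Derive y s) (Derive z s)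
       (Derive (Derive x) s) (Derive (Derive y) s) (Derive (Derive z) s)
       (c1 a b x y z Hc s Hs) (c2 a b x y z Hc s Hs) (c3 a b x y z Hc s Hs) (zpos a b x y z Hc s Hs)) as SP.
    cbv zeta in SP. apply SP. exact Habc.
  - intros HM s t Hs. unfold strip in Hs. cbv zeta.
    rewrite (pd1_hel a b x y z h Hc), (pd2_hel x y z h), (pd11_hel a b x y z h Hc), (pd21_hel a b x y z h Hc), (pd22_hel x y z h), (hel_Rt x y z h); auto.
    rewrite !Rt_dot.
    pose proof (c1 a b x y z Hc s Hs) as C1. pose proof (c2 a b x y z Hc s Hs) as C2.
    pose proof (c3 a b x y z Hc s Hs) as C3. pose proof (zpos a b x y z Hc s Hs) as Z.
    split; [|split; [|split; [|split; [|split]]]].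
    + unfold r4_dot; cbn [r4_1 r4_2 r4_3 r4_4]. lra.
    + apply exp_X; auto.
    + apply exp_X1; auto.
    + apply exp_X2; auto.
    + unfold r4_dot; cbn [r4_1 r4_2 r4_3 r4_4].
      set (x0 := x s) in *. set (y0 := y s) in *. set (z0 := z s) in *.
      set (p := Derive x s) in *. set (q := Derive y s) in *. set (r := Derive z s) in *.
      assert (Lg : (x0*p+y0*q)^2 + (p*y0 - x0*q)^2 = (x0*x0+y0*y0)*(p*p+q*q)) by ring.
      replace (x0*p+y0*q) with (-(z0*r)) in Lg by lra.
      replace (x0*x0+y0*y0) with (1-z0*z0) in Lg by lra.
      replace (p*p+q*q) with (1-r*r) in Lg by lra.
      assert (E : (p * p + q * q + r * r + 0 * 0) * ((- h * y0) * (- h * y0) + h * x0 * (h * x0) + 0 * 0 + z0 * z0) -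
                  (p * (- h * y0) + q * (h * x0) + r * 0 + 0 * z0) ^ 2
                  = h^2 * ((x0*x0+y0*y0) - (p*y0 - x0*q)^2) + z0*z0) by (rewrite C3; ring).
      rewrite E. replace (x0*x0+y0*y0) with (1-z0*z0) by lra.
      assert (0 <= h^2 * r^2) by nra. nra.
    + pose proof (span0 h (x s) (y s) (z s) (Derive x s) (Derive y s) (Derive z s)
       (Derive (Derive x) s) (Derive (Derive y) s) (Derive (Derive z) s) C1 C2 C3 Z) as SP.
      cbv zeta in SP. destruct (proj2 SP (HM s Hs)) as [a0 [b0 [c0 E]]].
      exists a0, b0, c0. apply (Rt_comb h t) in E. exact E.
Qed.

End Surf2.


Section CurveAn.
Variables (a b : Rbar) (x y z : R -> R).
Hypothesis Hc : profile_curve a b x y z.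

Definition kapS s := kap (x s) (y s) (z s) (Derive x s) (Derive y s) (Derive z s)
   (Derive (Derive x) s) (Derive (Derive y) s) (Derive (Derive z) s).

Lemma frameC s : in_I a b s ->
  Derive (Derive x) s = - x s + kapS s * (y s * Derive z s - z s * Derive y s) /\
  Derive (Derive y) s = - y s + kapS s * (z s * Derive x s - x s * Derive z s) /\
  Derive (Derive z) s = - z s - kapS s * ang_mom x y s.
Proof.
  intros Hs.
  pose proof (frame3 (x s) (y s) (z s) (Derive x s) (Derive y s) (Derive z s)
     (Derive (Derive x) s) (Derive (Derive y) s) (Derive (Derive z) s)
     (c1 a b x y z Hc s Hs) (c2 a b x y z Hc s Hs) (c3 a b x y z Hc s Hs)) as F.
  cbv zeta in F. pose proof (c4 a b x y z Hc s Hs) as C4. pose proof (c5 a b x y z Hc s Hs) as C5.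
  unfold kapS, kap, ang_mom.
  set (x0 := x s) in *. set (y0 := y s) in *. set (z0 := z s) in *.
  set (p := Derive x s) in *. set (q := Derive y s) in *. set (r := Derive z s) in *.
  set (P := Derive (Derive x) s) in *. set (Q := Derive (Derive y) s) in *. set (R0 := Derive (Derive z) s) in *.
  assert (C4p : P*x0+Q*y0+R0*z0 = -1) by lra. assert (C5p : P*p+Q*q+R0*r = 0) by lra.
  rewrite C4p, C5p in F. destruct F as [F1 [F2 F3]].
  split; [|split]; [rewrite F1 at 1|rewrite F2 at 1|rewrite F3 at 1]; ring.
Qed.

Lemma lagr s : in_I a b s -> Derive z s ^ 2 + ang_mom x y s ^ 2 = 1 - z s ^ 2.
Proof.
  intros Hs. pose proof (c1 a b x y z Hc s Hs) as C1. pose proof (c2 a b x y z Hc s Hs) as C2.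
  pose proof (c3 a b x y z Hc s Hs) as C3. unfold ang_mom.
  set (x0 := x s) in *. set (y0 := y s) in *. set (z0 := z s) in *.
  set (p := Derive x s) in *. set (q := Derive y s) in *. set (r := Derive z s) in *.
  assert (Lg : (x0*p+y0*q)^2 + (p*y0 - x0*q)^2 = (x0*x0+y0*y0)*(p*p+q*q)) by ring.
  replace (x0*p+y0*q) with (-(z0*r)) in Lg by lra.
  replace (x0*x0+y0*y0) with (1-z0*z0) in Lg by lra.
  replace (p*p+q*q) with (1-r*r) in Lg by lra.
  nra.
Qed.

Lemma Kder s : in_I a b s -> is_derive (ang_mom x y) s (kapS s * Derive z s).
Proof.
  intros Hs. destruct (cdx a b x y z Hc s Hs) as [X0 [X1 _]]. destruct (cdy a b x y z Hc s Hs) as [Y0 [Y1 _]].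
  unfold ang_mom. auto_derive. repeat split; auto. fixeta.
  destruct (frameC s Hs) as [F1 [F2 _]]. rewrite F1, F2.
  pose proof (c1 a b x y z Hc s Hs) as C1. pose proof (c2 a b x y z Hc s Hs) as C2.
  set (x0 := x s) in *. set (y0 := y s) in *. set (z0 := z s) in *.
  set (p := Derive x s) in *. set (q := Derive y s) in *. set (r := Derive z s) in *.
  set (k := kapS s).
  transitivity (k * (r * (x0*x0+y0*y0) - z0*(x0*p+y0*q))). ring.
  replace (x0*x0+y0*y0) with (1-z0*z0) by lra. replace (x0*p+y0*q) with (-(z0*r)) by lra. ring.
Qed.

Lemma cont_kapS s : in_I a b s -> continuous kapS s.
Proof.
  intros Hs. destruct (cdx a b x y z Hc s Hs) as [X0 [X1 X2]]. destruct (cdy a b x y z Hc s Hs) as [Y0 [Y1 Y2]].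
  destruct (cdz a b x y z Hc s Hs) as [Z0 [Z1 Z2]].
  apply (ex_derive_continuous (K:=R_AbsRing) (V:=R_NormedModule)). unfold kapS, kap.
  auto_derive. repeat split; auto.
Qed.

End CurveAn.

Lemma sqrt_eq_sq u v : 0 <= u -> 0 <= v -> u * u = v * v -> u = v.
Proof. intros. nra. Qed.

Section Dir1.
Variables (a b : Rbar) (x y z : R -> R) (h : R).
Hypothesis Hc : profile_curve a b x y z.
Hypothesis hh : 0 <= h.

Let Phi u := ang_mom x y u * z u ^ 2 / sqrt (h^2 * Derive z u ^ 2 + z u ^ 2).

Lemma Phi_der s : in_I a b s -> Ms x y z h s = 0 -> is_derive Phi s 0.
Proof.
  intros Hs HM.
  destruct (cdz a b x y z Hc s Hs) as [Z0 [Z1 _]].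
  pose proof (Kder a b x y z Hc s Hs) as KD.
  pose proof (zpos a b x y z Hc s Hs) as Zp.
  assert (Dp0 : 0 < h^2 * Derive z s ^ 2 + z s ^ 2).
  { assert (0 <= h^2*Derive z s^2) by (apply Rmult_le_pos; apply pow2_ge_0). assert (0 < z s^2) by (apply pow_lt; auto). lra. }
  assert (sDp0 : 0 < sqrt (h^2 * Derive z s ^ 2 + z s ^ 2)) by (apply sqrt_lt_R0; auto).
  assert (Eq1 : h*(h*1)*(Derive z s*(Derive z s*1)) + z s*(z s*1) = h^2 * Derive z s ^ 2 + z s ^ 2) by ring.
  assert (T : is_derive Phi s ((kapS x y z s*Derive z s*z s^2 + 2*ang_mom x y s*z s*Derive z s)/sqrt (h^2 * Derive z s ^ 2 + z s ^ 2)
      - ang_mom x y s*z s^2*(h^2*Derive z s*Derive (Derive z) s + z s*Derive z s)/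
        (sqrt (h^2 * Derive z s ^ 2 + z s ^ 2)*sqrt (h^2 * Derive z s ^ 2 + z s ^ 2)*sqrt (h^2 * Derive z s ^ 2 + z s ^ 2)))).
  { unfold Phi. auto_derive.
    - rewrite Eq1. repeat split; auto; try lra. exists (kapS x y z s * Derive z s). exact KD.
    - apply is_derive_unique in KD. fixeta. rewrite KD. rewrite Eq1. field. lra. }
  set (K := ang_mom x y s) in *. set (z0 := z s) in *. set (r := Derive z s) in *. set (k := kapS x y z s) in *.
  set (R0 := Derive (Derive z) s) in *.
  set (D := h^2 * r ^ 2 + z0 ^ 2) in *.
  set (sD := sqrt D) in *.
  assert (V : (k*r*z0^2 + 2*K*z0*r)/sD - K*z0^2*(h^2*r*R0 + z0*r)/(sD*sD*sD) = 0).
  { assert (E1 : (k*r*z0^2 + 2*K*z0*r)/sD - K*z0^2*(h^2*r*R0 + z0*r)/(sD*sD*sD)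
       = ((k*r*z0^2 + 2*K*z0*r)*(sD*sD) - K*z0^2*(h^2*r*R0 + z0*r))/(sD*sD*sD)) by (field; lra).
    rewrite E1. unfold sD at 1 2. rewrite sqrt_sqrt by lra.
    destruct (frameC a b x y z Hc s Hs) as [_ [_ F3]]. fold R0 K k z0 in F3. rewrite F3.
    pose proof (lagr a b x y z Hc s Hs) as L. fold r K z0 in L.
    unfold Ms, Mf in HM. change (kap (x s) (y s) (z s) (Derive x s) (Derive y s) (Derive z s)
      (Derive (Derive x) s) (Derive (Derive y) s) (Derive (Derive z) s)) with k in HM.
    change (Kf (x s) (y s) (Derive x s) (Derive y s)) with K in HM. fold z0 r in HM.
    assert (Id : (k * r * z0 ^ 2 + 2 * K * z0 * r) * D - K * z0 ^ 2 * (h ^ 2 * r * (- z0 - k * K) + z0 * r)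
       = r*z0*(z0 * (h ^ 2 * (1 - z0 ^ 2) + z0 ^ 2) * k + K * (z0 ^ 2 * (1 + h ^ 2) + 2 * h ^ 2 * r ^ 2))
         + r*z0^2*k*h^2*(r^2+K^2-(1-z0^2))) by (unfold D; ring).
    rewrite Id, HM, L. unfold Rdiv. ring. }
  rewrite V in T. exact T.
Qed.

Lemma dir1 : z_nonconstant a b z -> (forall s, in_I a b s -> Ms x y z h s = 0) ->
  exists c eps : R, 0 <= c < 1/2 /\ (eps = 1 \/ eps = -1) /\
        forall s, in_I a b s -> ang_mom x y s = eps * Khc h c (z s).
Proof.
  intros [s1 [s2 [I1 [I2 Hne]]]] HM.
  assert (Hconst : forall s, in_I a b s -> Phi s = Phi s1).
  { intros s Hs. apply (const_on_I a b Phi); auto. intros u Hu. apply Phi_der; auto. }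
  set (P0 := Phi s1) in *. clearbody P0.
  assert (Rel : forall s, in_I a b s -> P0 * sqrt (h^2 * Derive z s ^ 2 + z s ^ 2) = ang_mom x y s * z s ^ 2).
  { intros s Hs. rewrite <- (Hconst s Hs). unfold Phi. field.
    pose proof (zpos a b x y z Hc s Hs). apply Rgt_not_eq. apply sqrt_lt_R0. nra. }
  assert (Rel2 : forall s, in_I a b s -> P0^2 * (h^2 * Derive z s ^ 2 + z s ^ 2) = ang_mom x y s ^ 2 * z s ^ 4).
  { intros s Hs. pose proof (Rel s Hs) as E. pose proof (zpos a b x y z Hc s Hs).
    assert (E2 : (P0 * sqrt (h^2 * Derive z s ^ 2 + z s ^ 2))^2 = (ang_mom x y s * z s ^ 2)^2) by (rewrite E; reflexivity).
    rewrite Rpow_mult_distr, pow2_sqrt in E2 by nra. rewrite E2. ring. }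
  exists (Rabs P0), (if Rle_dec 0 P0 then -1 else 1).
  split; [split|split].
  - apply Rabs_pos.
  - destruct (Rlt_or_le (Rabs P0) (1/2)) as [?|Hge]; auto. exfalso.
    assert (Hr : forall s, in_I a b s -> Derive z s = 0).
    { intros s Hs. pose proof (Rel2 s Hs) as E. pose proof (lagr a b x y z Hc s Hs) as L.
      pose proof (zpos a b x y z Hc s Hs) as Zp.
      assert (P2 : 1/4 <= P0^2). { assert (Rabs P0 * Rabs P0 = P0^2) by (rewrite <- Rabs_mult; rewrite Rabs_pos_eq; nra). nra. }
      set (r := Derive z s) in *. set (K := ang_mom x y s) in *. set (z0 := z s) in *.
      clearbody r K z0.
      assert (E3 : r^2 * (z0^4 + h^2 * P0^2) = - z0^2 * ((z0^2 - 1/2)^2 + (P0^2 - 1/4))).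
      { replace (K^2) with (1 - z0^2 - r^2) in E by lra. nra. }
      assert (0 <= z0^2 * ((z0^2 - 1/2)^2 + (P0^2 - 1/4))) by (apply Rmult_le_pos; [apply pow2_ge_0 | assert (0 <= (z0^2-1/2)^2) by apply pow2_ge_0; lra]).
      assert (0 < z0^4) by (apply pow_lt; auto).
      assert (0 <= r^2*(h^2*P0^2)) by (apply Rmult_le_pos; [apply pow2_ge_0| apply Rmult_le_pos; apply pow2_ge_0]).
      assert (r^2 * z0^4 <= 0) by lra.
      assert (r^2 <= 0). { apply (Rmult_le_reg_r (z0^4)); lra. }
      nra. }
    apply Hne. apply (const_on_I a b z); auto. intros s Hs.
    destruct (cdz a b x y z Hc s Hs) as [Z0 _]. rewrite <- (Hr s Hs). apply Derive_correct. auto.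
  - destruct (Rle_dec 0 P0); auto.
  - intros s Hs. pose proof (Rel s Hs) as E. pose proof (Rel2 s Hs) as E2.
    pose proof (lagr a b x y z Hc s Hs) as L. pose proof (zpos a b x y z Hc s Hs) as Zp.
    set (r := Derive z s) in *. set (K := ang_mom x y s) in *. set (z0 := z s) in *.
    clearbody r K z0.
    assert (Dp : 0 < h ^ 2 * r ^ 2 + z0 ^ 2) by nra.
    assert (Gp : 0 < h ^ 2 + (1 - h ^ 2) * z0 ^ 2) by nra.
    assert (Qp : 0 < z0 ^ 4 + h ^ 2 * Rabs P0 ^ 2). { assert (0 <= h^2 * Rabs P0 ^ 2) by (apply Rmult_le_pos; apply pow2_ge_0). assert (0 < z0^4) by (apply pow_lt; auto). lra. }
    assert (Hsq : sqrt (h ^ 2 * r ^ 2 + z0 ^ 2) * sqrt (z0 ^ 4 + h ^ 2 * Rabs P0 ^ 2)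
                  = z0 ^ 2 * sqrt (h ^ 2 + (1 - h ^ 2) * z0 ^ 2)).
    { apply sqrt_eq_sq.
      - apply Rmult_le_pos; apply sqrt_pos.
      - apply Rmult_le_pos; [nra | apply sqrt_pos].
      - transitivity ((sqrt (h ^ 2 * r ^ 2 + z0 ^ 2) * sqrt (h ^ 2 * r ^ 2 + z0 ^ 2)) *
                      (sqrt (z0 ^ 4 + h ^ 2 * Rabs P0 ^ 2) * sqrt (z0 ^ 4 + h ^ 2 * Rabs P0 ^ 2))). ring.
        transitivity (z0^4 * (sqrt (h ^ 2 + (1 - h ^ 2) * z0 ^ 2) * sqrt (h ^ 2 + (1 - h ^ 2) * z0 ^ 2))). 2: ring.
        rewrite !sqrt_sqrt by lra.
        rewrite pow2_abs.
        assert (E3 : (P0 ^ 2) * (h ^ 2 * r ^ 2 + z0 ^ 2) = K^2 * z0^4) by (rewrite <- E2; ring).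
        apply (Rmult_eq_reg_l (h ^ 2 * r ^ 2 + z0 ^ 2)); [|lra].
        transitivity ((h ^ 2 * r ^ 2 + z0 ^ 2)^2 * z0^4 + h^2 * (h ^ 2 * r ^ 2 + z0 ^ 2) * ((P0 ^ 2) * (h ^ 2 * r ^ 2 + z0 ^ 2))). ring.
        rewrite E3. replace (K^2) with (1 - z0^2 - r^2) by lra. ring. }
    assert (sq2 : 0 < sqrt (z0 ^ 4 + h ^ 2 * Rabs P0 ^ 2)) by (apply sqrt_lt_R0; auto).
    assert (sq1 : 0 < sqrt (h ^ 2 * r ^ 2 + z0 ^ 2)) by (apply sqrt_lt_R0; auto).
    unfold Khc.
    assert (Heps : (if Rle_dec 0 P0 then -1 else 1) * (- Rabs P0) = P0).
    { destruct (Rle_dec 0 P0). rewrite Rabs_pos_eq; lra. rewrite Rabs_left; lra. }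
    apply (Rmult_eq_reg_r (z0^2 * sqrt (z0 ^ 4 + h ^ 2 * Rabs P0 ^ 2))); [|apply Rgt_not_eq; apply Rmult_lt_0_compat; [apply pow_lt; auto | auto]].
    transitivity (P0 * (sqrt (h ^ 2 * r ^ 2 + z0 ^ 2) * sqrt (z0 ^ 4 + h ^ 2 * Rabs P0 ^ 2))).
    + transitivity ((K * z0^2) * sqrt (z0 ^ 4 + h ^ 2 * Rabs P0 ^ 2)). ring. rewrite <- E. ring.
    + rewrite Hsq. set (e := if Rle_dec 0 P0 then -1 else 1) in *. clearbody e. rewrite <- Heps at 1. field. lra.
Qed.

End Dir1.

Section Dir2.
Variables (a b : Rbar) (x y z : R -> R) (h c eps : R).
Hypothesis Hc : profile_curve a b x y z.
Hypothesis hh : 0 <= h.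
Hypothesis Hc0 : 0 <= c < 1/2.
Hypothesis Heps : eps = 1 \/ eps = -1.
Hypothesis HK : forall s, in_I a b s -> ang_mom x y s = eps * Khc h c (z s).

Lemma zle1 s : in_I a b s -> z s ^ 2 <= 1.
Proof. intros Hs. pose proof (lagr a b x y z Hc s Hs). assert (0 <= Derive z s ^ 2) by apply pow2_ge_0.
  assert (0 <= ang_mom x y s ^ 2) by apply pow2_ge_0. lra. Qed.

Lemma K2 s : in_I a b s -> ang_mom x y s ^ 2 * (z s ^ 4 + h^2 * c^2) = c^2 * (h^2 + (1 - h^2) * z s ^ 2).
Proof.
  intros Hs. rewrite HK; auto. pose proof (zle1 s Hs). pose proof (zpos a b x y z Hc s Hs).
  set (w := z s) in *. clearbody w.
  assert (Gp : 0 <= h^2 + (1 - h^2) * w^2).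
  { assert (0 <= h^2 * (1 - w^2)) by (apply Rmult_le_pos; [apply pow2_ge_0|lra]). nra. }
  assert (Qp : 0 < w^4 + h^2 * c^2).
  { assert (0 <= h^2 * c^2) by (apply Rmult_le_pos; apply pow2_ge_0). assert (0 < w^4) by (apply pow_lt; auto). lra. }
  unfold Khc.
  assert (E2 : eps^2 = 1) by (destruct Heps; subst; ring).
  assert (S1 : sqrt (h ^ 2 + (1 - h ^ 2) * w ^ 2) ^ 2 = h ^ 2 + (1 - h ^ 2) * w ^ 2) by (apply pow2_sqrt; auto).
  assert (S2 : sqrt (w^4 + h^2*c^2) ^ 2 = w^4 + h^2*c^2) by (apply pow2_sqrt; lra).
  assert (S3 : 0 < sqrt (w^4 + h^2*c^2)) by (apply sqrt_lt_R0; auto).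
  transitivity (eps^2 * c^2 * sqrt (h ^ 2 + (1 - h ^ 2) * w ^ 2) ^ 2 / sqrt (w^4 + h^2*c^2) ^ 2 * (w^4 + h^2*c^2)).
  field. lra. rewrite E2, S1, S2. field. lra.
Qed.

Lemma PolyId s : in_I a b s -> Derive z s ^ 2 * (z s ^ 4 + h^2 * c^2) = - z s ^ 2 * (z s ^ 4 - z s ^ 2 + c ^ 2).
Proof.
  intros Hs. pose proof (K2 s Hs) as E. pose proof (lagr a b x y z Hc s Hs) as L.
  set (r := Derive z s) in *. set (K := ang_mom x y s) in *. set (w := z s) in *. clearbody r K w.
  replace (K^2) with (1 - w^2 - r^2) in E by lra. nra.
Qed.

Lemma ball_in_I s : in_I a b s -> exists d, 0 < d /\ forall u, Rabs (u - s) < d -> in_I a b u.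
Proof.
  intros Hs. destruct (in_I_loc a b s Hs) as [d Hd]. exists d. split. apply cond_pos.
  intros u Hu. apply Hd. exact Hu.
Qed.

Lemma case_c0 : c = 0 -> forall s, in_I a b s -> Ms x y z h s = 0.
Proof.
  intros c0 s Hs.
  assert (K0 : forall u, in_I a b u -> ang_mom x y u = 0).
  { intros u Hu. rewrite HK; auto. unfold Khc. rewrite c0. unfold Rdiv. ring. }
  assert (Kr : forall u, in_I a b u -> kapS x y z u * Derive z u = 0).
  { intros u Hu. apply (deriv_zero_fun a b (ang_mom x y) u); auto. apply (Kder a b x y z Hc); auto. }
  assert (k0 : kapS x y z s = 0).
  { destruct (Req_dec (kapS x y z s) 0) as [E|E]; auto. exfalso.
    destruct (cont_nonzero _ s (cont_kapS a b x y z Hc s Hs) E) as [d1 [Hd1 H1]].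
    destruct (ball_in_I s Hs) as [d2 [Hd2 H2]].
    assert (R0 : Derive (Derive z) s = 0).
    { apply (deriv_zero_loc (Derive z) s _ (Rmin d1 d2)).
      - apply Rmin_pos; auto.
      - intros u Hu. assert (Hu1 : Rabs (u - s) < d1) by (eapply Rlt_le_trans; [exact Hu| apply Rmin_l]).
        assert (Hu2 : Rabs (u - s) < d2) by (eapply Rlt_le_trans; [exact Hu| apply Rmin_r]).
        pose proof (Kr u (H2 u Hu2)) as E0. pose proof (H1 u Hu1).
        apply Rmult_integral in E0. destruct E0; auto. contradiction.
      - destruct (cdz a b x y z Hc s Hs) as [_ [Z1 _]]. apply Derive_correct. auto. }
    destruct (frameC a b x y z Hc s Hs) as [_ [_ F3]]. rewrite K0 in F3; auto.
    pose proof (zpos a b x y z Hc s Hs). lra. }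
  unfold Ms, Mf. change (kap (x s) (y s) (z s) (Derive x s) (Derive y s) (Derive z s)
      (Derive (Derive x) s) (Derive (Derive y) s) (Derive (Derive z) s)) with (kapS x y z s).
  rewrite k0. change (Kf (x s) (y s) (Derive x s) (Derive y s)) with (ang_mom x y s).
  rewrite K0; auto. ring.
Qed.

Definition gS s := 2 * Derive (Derive z) s * (z s ^ 4 + h^2 * c^2) + 4 * z s ^ 3 * Derive z s ^ 2
   + (6 * z s ^ 5 - 4 * z s ^ 3 + 2 * c^2 * z s).

Lemma rg0 s : in_I a b s -> Derive z s * gS s = 0.
Proof.
  intros Hs. destruct (cdz a b x y z Hc s Hs) as [Z0 [Z1 _]].
  apply (deriv_zero_fun a b (fun u => Derive z u ^ 2 * (z u ^ 4 + h^2 * c^2) + z u ^ 2 * (z u ^ 4 - z u ^ 2 + c ^ 2)) s); auto.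
  - intros u Hu. rewrite PolyId; auto. ring.
  - auto_derive. repeat split; auto. fixeta. unfold gS. ring.
Qed.

Lemma cont_gS s : in_I a b s -> continuous gS s.
Proof.
  intros Hs. destruct (cdz a b x y z Hc s Hs) as [Z0 [Z1 Z2]].
  apply (ex_derive_continuous (K:=R_AbsRing) (V:=R_NormedModule)). unfold gS.
  auto_derive. repeat split; auto.
Qed.

Lemma gS_zero : z_nonconstant a b z -> 0 < c -> forall s, in_I a b s -> gS s = 0.
Proof.
  intros [s1 [s2 [I1 [I2 Hne]]]] cp s0 Hs0.
  destruct (Req_dec (gS s0) 0) as [E|E]; auto. exfalso.
  assert (Ppt : forall u, in_I a b u -> gS u <> 0 ->
     Derive z u = 0 /\ Derive (Derive z) u = 0).
  { intros u Hu Hg.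
    destruct (cont_nonzero _ u (cont_gS u Hu) Hg) as [d1 [Hd1 H1]].
    destruct (ball_in_I u Hu) as [d2 [Hd2 H2]].
    assert (Hr : forall v, Rabs (v - u) < Rmin d1 d2 -> Derive z v = 0).
    { intros v Hv. assert (Hv1 : Rabs (v - u) < d1) by (eapply Rlt_le_trans; [exact Hv| apply Rmin_l]).
      assert (Hv2 : Rabs (v - u) < d2) by (eapply Rlt_le_trans; [exact Hv| apply Rmin_r]).
      pose proof (rg0 v (H2 v Hv2)) as E0. apply Rmult_integral in E0. destruct E0 as [?|E0]; auto.
      exfalso. apply (H1 v Hv1 E0). }
    split. apply Hr. rewrite Rminus_eq_0, Rabs_R0. apply Rmin_pos; auto.
    apply (deriv_zero_loc (Derive z) u _ (Rmin d1 d2)); auto. apply Rmin_pos; auto.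
    destruct (cdz a b x y z Hc u Hu) as [_ [Z1 _]]. apply Derive_correct. auto. }
  assert (Hall : forall s, in_I a b s -> gS s <> 0).
  { intros s3 Hs3. apply (clopen_I a b (fun s => gS s <> 0) ) with (s0 := s0); auto.
    - intros s Hs Hg. destruct (cont_nonzero _ s (cont_gS s Hs) Hg) as [d [Hd H]].
      exists d. split; auto.
    - intros s Hs Hlim.
      assert (A1 : gS s - (6 * z s ^ 5 - 4 * z s ^ 3 + 2 * c^2 * z s) = 0).
      { apply (cont_zero_lim (fun u => gS u - (6 * z u ^ 5 - 4 * z u ^ 3 + 2 * c^2 * z u))).
        - destruct (cdz a b x y z Hc s Hs) as [Z0 [Z1 Z2]].
          apply (ex_derive_continuous (K:=R_AbsRing) (V:=R_NormedModule)). unfold gS.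
          auto_derive. repeat split; auto.
        - intros d Hd. destruct (Hlim d Hd) as [u [Iu [Hu Pu]]]. exists u. split; auto.
          destruct (Ppt u Iu Pu) as [P1 P2]. unfold gS. rewrite P1, P2. ring. }
      assert (A2 : z s ^ 4 - z s ^ 2 + c^2 = 0).
      { apply (cont_zero_lim (fun u => z u ^ 4 - z u ^ 2 + c^2)).
        - destruct (cdz a b x y z Hc s Hs) as [Z0 [Z1 Z2]].
          apply (ex_derive_continuous (K:=R_AbsRing) (V:=R_NormedModule)).
          auto_derive. repeat split; auto.
        - intros d Hd. destruct (Hlim d Hd) as [u [Iu [Hu Pu]]]. exists u. split; auto.
          destruct (Ppt u Iu Pu) as [P1 P2]. pose proof (PolyId u Iu) as PI. rewrite P1 in PI.
          pose proof (zpos a b x y z Hc u Iu) as Zu. 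
          assert (0 < z u ^ 2) by (apply pow_lt; auto).
          assert (z u ^ 2 * (z u ^ 4 - z u ^ 2 + c ^ 2) = 0) by (rewrite pow_i in PI; [lra|lia]).
          apply Rmult_integral in H0. destruct H0; auto. lra. }
      pose proof (zpos a b x y z Hc s Hs) as Zs.
      intro G0. rewrite G0 in A1.
      set (w := z s) in *. clearbody w.
      assert (B : 3 * w^4 - 2 * w^2 + c^2 = 0).
      { assert (w * (3 * w^4 - 2 * w^2 + c^2) = 0) by lra. apply Rmult_integral in H. destruct H; auto; lra. }
      assert (w^2 = 2 * c^2) by lra.
      assert (c^2 * (4 * c^2 - 1) = 0) by nra.
      apply Rmult_integral in H0. destruct H0 as [H0|H0].
      + assert (c = 0) by nra. lra.
      + nra. }
  apply Hne. apply (const_on_I a b z); auto. intros s Hs.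
  destruct (Ppt s Hs (Hall s Hs)) as [P1 _]. rewrite <- P1.
  destruct (cdz a b x y z Hc s Hs) as [Z0 _]. apply Derive_correct. auto.
Qed.

Lemma case_cpos : z_nonconstant a b z -> 0 < c -> forall s, in_I a b s -> Ms x y z h s = 0.
Proof.
  intros Hnc cp s Hs.
  pose proof (gS_zero Hnc cp s Hs) as G0. unfold gS in G0.
  pose proof (K2 s Hs) as HK2. pose proof (PolyId s Hs) as Hr.
  destruct (frameC a b x y z Hc s Hs) as [_ [_ F3]].
  pose proof (zpos a b x y z Hc s Hs) as Zp. pose proof (zle1 s Hs) as Z1.
  unfold Ms, Mf. change (kap (x s) (y s) (z s) (Derive x s) (Derive y s) (Derive z s)
      (Derive (Derive x) s) (Derive (Derive y) s) (Derive (Derive z) s)) with (kapS x y z s).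
  change (Kf (x s) (y s) (Derive x s) (Derive y s)) with (ang_mom x y s).
  set (k := kapS x y z s) in *. set (K := ang_mom x y s) in *. set (w := z s) in *.
  set (r := Derive z s) in *. set (R0 := Derive (Derive z) s) in *. clearbody k K w r R0.
  set (D4 := w ^ 4 + h^2 * c^2).
  assert (D4p : 0 < D4).
  { unfold D4. assert (0 <= h^2 * c^2) by (apply Rmult_le_pos; apply pow2_ge_0). assert (0 < w^4) by (apply pow_lt; auto). lra. }
  set (G := h ^ 2 * (1 - w ^ 2) + w ^ 2).
  assert (Gp : 0 < G).
  { unfold G. assert (0 <= h^2 * (1 - w^2)) by (apply Rmult_le_pos; [apply pow2_ge_0|lra]). assert (0 < w^2) by (apply pow_lt; auto). lra. }
  assert (HK2' : K^2 * D4 = c^2 * G) by (unfold D4, G; rewrite HK2; ring).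
  assert (Kne : K <> 0).
  { intro K0. rewrite K0 in HK2'. assert (0 < c^2 * G) by (apply Rmult_lt_0_compat; [apply pow_lt|]; auto). 
    rewrite pow_i in HK2' by lia. lra. }
  assert (Hk : k * K = - w - R0) by lra.
  assert (HR : R0 * D4 = - (4 * w ^ 3 * r ^ 2 + (6 * w ^ 5 - 4 * w ^ 3 + 2 * c ^ 2 * w)) / 2) by (unfold D4; lra).
  assert (Hr' : r^2 * D4 = - w ^ 2 * (w ^ 4 - w ^ 2 + c ^ 2)) by (unfold D4; lra).
  set (L := w ^ 2 * (1 + h ^ 2) + 2 * h ^ 2 * r ^ 2).
  set (M := w * G * k + K * L).
  assert (A : M * K * D4 = w * G * D4 * (k * K) + L * (K^2 * D4)) by (unfold M; ring).
  rewrite Hk, HK2' in A.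
  assert (B : w * G * D4 * (- w - R0) + L * (c^2 * G) = - w^2 * G * D4 - w * G * (R0 * D4) + c^2 * G * L) by ring.
  rewrite HR in B.
  assert (C : - w^2 * G * D4 - w * G * (- (4 * w ^ 3 * r ^ 2 + (6 * w ^ 5 - 4 * w ^ 3 + 2 * c ^ 2 * w)) / 2) + c^2 * G * L
             = G * (- w^2 * D4 + 2 * (r^2 * D4) + 3 * w^6 - 2 * w^4 + 2 * c^2 * w^2 + c^2 * h^2 * w^2)) by (unfold L, D4; field).
  rewrite Hr' in C.
  assert (Z : M * K * D4 = 0).
  { rewrite A, B, C. unfold D4. ring. }
  fold G. fold L. fold M.
  apply Rmult_integral in Z. destruct Z as [Z|Z]; [|lra].
  apply Rmult_integral in Z. destruct Z as [Z|Z]; auto. contradiction.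
Qed.

Lemma dir2 : z_nonconstant a b z -> forall s, in_I a b s -> Ms x y z h s = 0.
Proof.
  intros Hnc. destruct (Req_dec c 0) as [E|E].
  - apply case_c0; auto.
  - apply case_cpos; auto. lra.
Qed.

End Dir2.


Lemma part1 (h : R) (hh : 0 <= h) :
  (forall (a b : Rbar) (x y z : R -> R),
     profile_curve a b x y z -> z_nonconstant a b z ->
     (minimal_in_S3 (strip a b) (helicoidal h x y z) <->
      exists c eps : R, 0 <= c < 1/2 /\ (eps = 1 \/ eps = -1) /\
        forall s, in_I a b s -> ang_mom x y s = eps * Khc h c (z s))).
Proof.
  intros a b x y z Hc Hnc. rewrite (minimal_iff a b x y z h Hc). split.
  - intros HM. apply (dir1 a b x y z h Hc Hnc HM).
  - intros [c [eps [Hc0 [He HK]]]]. apply (dir2 a b x y z h c eps Hc Hc0 He HK Hnc).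
Qed.


Lemma gronwall (a b : Rbar) (E dE : R -> R) (C : R) :
  (forall s, in_I a b s -> is_derive E s (dE s)) ->
  (forall s, in_I a b s -> 0 <= E s) ->
  (forall s, in_I a b s -> Rabs (dE s) <= C * E s) ->
  forall s0, in_I a b s0 -> E s0 = 0 -> forall s, in_I a b s -> E s = 0.
Proof.
  intros Hd Hp Hb s0 I0 E0 s Is.
  destruct (Rle_or_lt s0 s) as [Hle|Hlt].
  - set (F := fun u => E u * exp (- C * u)).
    destruct (MVT_gen F s0 s (fun u => (dE u - C * E u) * exp (- C * u))) as [xi [Hxi Hm]].
    + intros u Hu. rewrite Rmin_left, Rmax_right in Hu by lra.
      assert (Iu : in_I a b u) by (apply (in_I_conv a b s0 s); auto; lra).
      unfold F. auto_derive. exists (dE u). auto.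
      fixeta. rewrite (is_derive_unique _ _ _ (Hd u Iu)). ring.
    + intros u Hu. rewrite Rmin_left, Rmax_right in Hu by lra.
      assert (Iu : in_I a b u) by (apply (in_I_conv a b s0 s); auto; lra).
      apply continuity_pt_filterlim. apply (ex_derive_continuous (K:=R_AbsRing) (V:=R_NormedModule)).
      unfold F. auto_derive. exists (dE u). auto.
    + rewrite Rmin_left, Rmax_right in Hxi by lra.
      assert (Ix : in_I a b xi) by (apply (in_I_conv a b s0 s); auto; lra).
      assert (dE xi - C * E xi <= 0). { pose proof (Hb xi Ix). pose proof (Rle_abs (dE xi)). lra. }
      assert (0 < exp (- C * xi)) by apply exp_pos.
      assert (F s - F s0 <= 0). { rewrite Hm. apply Rmult_le_0_r. apply Rmult_le_0_r; lra. lra. }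
      unfold F in H1. rewrite E0 in H1. assert (0 < exp (- C * s)) by apply exp_pos.
      pose proof (Hp s Is). nra.
  - set (F := fun u => E u * exp (C * u)).
    destruct (MVT_gen F s s0 (fun u => (dE u + C * E u) * exp (C * u))) as [xi [Hxi Hm]].
    + intros u Hu. rewrite Rmin_left, Rmax_right in Hu by lra.
      assert (Iu : in_I a b u) by (apply (in_I_conv a b s s0); auto; lra).
      unfold F. auto_derive. exists (dE u). auto.
      fixeta. rewrite (is_derive_unique _ _ _ (Hd u Iu)). ring.
    + intros u Hu. rewrite Rmin_left, Rmax_right in Hu by lra.
      assert (Iu : in_I a b u) by (apply (in_I_conv a b s s0); auto; lra).
      apply continuity_pt_filterlim. apply (ex_derive_continuous (K:=R_AbsRing) (V:=R_NormedModule)).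
      unfold F. auto_derive. exists (dE u). auto.
    + rewrite Rmin_left, Rmax_right in Hxi by lra.
      assert (Ix : in_I a b xi) by (apply (in_I_conv a b s s0); auto; lra).
      assert (0 <= dE xi + C * E xi). { pose proof (Hb xi Ix). pose proof (Rle_abs (- dE xi)). rewrite Rabs_Ropp in H0. lra. }
      assert (0 < exp (C * xi)) by apply exp_pos.
      assert (0 <= F s0 - F s). { rewrite Hm. apply Rmult_le_pos. apply Rmult_le_pos; lra. lra. }
      unfold F in H1. rewrite E0 in H1. assert (0 < exp (C * s)) by apply exp_pos.
      pose proof (Hp s Is). nra.
Qed.

Definition phi h c w := - (4*w^3*(-w^2*(w^4 - w^2 + c^2)) + (6*w^5 - 4*w^3 + 2*c^2*w)*(w^4+h^2*c^2)) * / (2*(w^4+h^2*c^2)^2).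

Lemma phi_Ck h c n : Ck Rpos n (phi h c).
Proof.
  unfold phi. ck open_Rpos. intros w Hw. unfold Rpos in Hw.
  assert (0 <= h^2*c^2) by (apply Rmult_le_pos; apply pow2_ge_0). assert (0 < w^4) by (apply pow_lt; auto).
  assert (0 < (w^4 + h^2*c^2)^2) by (apply pow_lt; lra). lra.
Qed.

Lemma phi_lip h c : 0 < c -> exists M, 0 <= M /\ forall a1 a2, c <= a1 <= 1 -> c <= a2 <= 1 ->
  Rabs (phi h c a1 - phi h c a2) <= M * Rabs (a1 - a2).
Proof.
  intros cp.
  assert (D1 : forall w, 0 < w -> ex_derive (phi h c) w).
  { intros w Hw. destruct (Ck_S_inv _ _ _ (phi_Ck h c 1)) as [H _]. auto. }
  assert (D2 : forall w, 0 < w -> ex_derive (Derive (phi h c)) w).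
  { intros w Hw. destruct (Ck_S_inv _ _ _ (phi_Ck h c 2)) as [_ H]. destruct (Ck_S_inv _ _ _ H) as [H2 _]. auto. }
  destruct (Rle_or_lt c 1) as [c1|c1].
  2: { exists 0. split. lra. intros. lra. }
  destruct (continuity_ab_maj (fun w => Rabs (Derive (phi h c) w)) c 1 c1) as [wM [HM HwM]].
  { intros w Hw. apply continuity_pt_filterlim.
    apply (continuous_comp (Derive (phi h c)) Rabs).
    apply (ex_derive_continuous (K:=R_AbsRing) (V:=R_NormedModule)). apply D2. lra.
    apply continuous_Rabs. }
  exists (Rabs (Derive (phi h c) wM)). split. apply Rabs_pos.
  intros a1 a2 Ha1 Ha2.
  destruct (MVT_gen (phi h c) a2 a1 (Derive (phi h c))) as [xi [Hxi Hm]].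
  - intros u Hu. apply Derive_correct. apply D1.
    assert (c <= Rmin a2 a1) by (apply Rmin_glb; lra). lra.
  - intros u Hu. apply continuity_pt_filterlim.
    apply (ex_derive_continuous (K:=R_AbsRing) (V:=R_NormedModule)). apply D1.
    assert (c <= Rmin a2 a1) by (apply Rmin_glb; lra). lra.
  - rewrite Hm. rewrite Rabs_mult. apply Rmult_le_compat_r. apply Rabs_pos.
    apply HM. split.
    + assert (c <= Rmin a2 a1) by (apply Rmin_glb; lra). lra.
    + assert (Rmax a2 a1 <= 1) by (apply Rmax_lub; lra). lra.
Qed.

Section Uniq.
Variables (a b : Rbar) (x y z : R -> R) (h c : R).
Hypothesis Hc : profile_curve a b x y z.
Hypothesis Hc0 : 0 <= c < 1/2.
Hypothesis HK : forall s, in_I a b s -> ang_mom x y s = Khc h c (z s).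
Hypothesis Hnc : z_nonconstant a b z.

Lemma HK1 : forall s, in_I a b s -> ang_mom x y s = 1 * Khc h c (z s).
Proof. intros s Hs. rewrite HK; auto. ring. Qed.
Lemma Heps1 : 1 = 1 \/ 1 = -1. Proof. left; reflexivity. Qed.

Lemma R_phi : 0 < c -> forall s, in_I a b s -> Derive (Derive z) s = phi h c (z s).
Proof.
  intros cp s Hs.
  pose proof (gS_zero a b x y z h c 1 Hc Hc0 Heps1 HK1 Hnc cp s Hs) as G0. unfold gS in G0.
  pose proof (PolyId a b x y z h c 1 Hc Heps1 HK1 s Hs) as PI.
  pose proof (zpos a b x y z Hc s Hs) as Zp.
  unfold phi. set (w := z s) in *. set (r := Derive z s) in *. set (R0 := Derive (Derive z) s) in *.
  clearbody w r R0.
  assert (D4p : 0 < w^4 + h^2*c^2).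
  { assert (0 <= h^2*c^2) by (apply Rmult_le_pos; apply pow2_ge_0). assert (0 < w^4) by (apply pow_lt; auto). lra. }
  apply (Rmult_eq_reg_r (2*(w^4+h^2*c^2)^2)). 2: { apply Rgt_not_eq. apply Rmult_lt_0_compat. lra. apply pow_lt; lra. }
  rewrite Rmult_assoc, Rinv_l. 2: { apply Rgt_not_eq. apply Rmult_lt_0_compat. lra. apply pow_lt; lra. }
  rewrite <- PI.
  transitivity ((2 * R0 * (w ^ 4 + h ^ 2 * c ^ 2) + 4 * w ^ 3 * r ^ 2 + (6 * w ^ 5 - 4 * w ^ 3 + 2 * c ^ 2 * w)) * (w^4 + h^2*c^2)
    - (4 * w ^ 3 * (r ^ 2 * (w ^ 4 + h ^ 2 * c ^ 2)) + (6 * w ^ 5 - 4 * w ^ 3 + 2 * c ^ 2 * w) * (w ^ 4 + h ^ 2 * c ^ 2))). ring.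
  rewrite G0. ring.
Qed.

Lemma z_bounds : 0 < c -> forall s, in_I a b s -> c <= z s <= 1.
Proof.
  intros cp s Hs.
  pose proof (PolyId a b x y z h c 1 Hc Heps1 HK1 s Hs) as PI.
  pose proof (zpos a b x y z Hc s Hs) as Zp. pose proof (zle1 a b x y z Hc s Hs) as Z1.
  set (w := z s) in *. set (r := Derive z s) in *. clearbody w r.
  assert (D4p : 0 < w^4 + h^2*c^2).
  { assert (0 <= h^2*c^2) by (apply Rmult_le_pos; apply pow2_ge_0). assert (0 < w^4) by (apply pow_lt; auto). lra. }
  assert (0 <= r^2 * (w^4 + h^2*c^2)) by (apply Rmult_le_pos; [apply pow2_ge_0|lra]).
  assert (0 < w^2) by (apply pow_lt; auto).
  assert (w^4 - w^2 + c^2 <= 0).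
  { destruct (Rle_or_lt (w^4 - w^2 + c^2) 0); auto.
    assert (0 < w^2 * (w^4 - w^2 + c^2)) by (apply Rmult_lt_0_compat; auto). lra. }
  assert (0 <= w^4) by (apply pow_le; lra).
  split; [|nra].
  destruct (Rle_or_lt c w); auto. assert (w^2 < c^2) by nra. lra.
Qed.

End Uniq.

Lemma zuniq_pos (a b : Rbar) (x1 y1 z1 x2 y2 z2 : R -> R) (h c : R) :
  0 < c -> c < 1/2 ->
  profile_curve a b x1 y1 z1 -> profile_curve a b x2 y2 z2 ->
  z_nonconstant a b z1 -> z_nonconstant a b z2 ->
  (forall s, in_I a b s -> ang_mom x1 y1 s = Khc h c (z1 s)) ->
  (forall s, in_I a b s -> ang_mom x2 y2 s = Khc h c (z2 s)) ->
  forall s0, in_I a b s0 -> z1 s0 = z2 s0 -> Derive z1 s0 = Derive z2 s0 ->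
  forall s, in_I a b s -> z1 s = z2 s.
Proof.
  intros cp c12 Hc1 Hc2 Hn1 Hn2 HK1 HK2 s0 I0 E0 E1 s Is.
  assert (Hc0 : 0 <= c < 1/2) by lra.
  destruct (phi_lip h c cp) as [M [HM0 HM]].
  set (E := fun u => (z1 u - z2 u)^2 + (Derive z1 u - Derive z2 u)^2).
  assert (HE : E s = 0).
  { apply (gronwall a b E (fun u => 2*(z1 u - z2 u)*(Derive z1 u - Derive z2 u)
       + 2*(Derive z1 u - Derive z2 u)*(phi h c (z1 u) - phi h c (z2 u))) (1 + M)) with s0; auto.
    - intros u Iu. destruct (cdz a b x1 y1 z1 Hc1 u Iu) as [A0 [A1 _]].
      destruct (cdz a b x2 y2 z2 Hc2 u Iu) as [B0 [B1 _]].
      unfold E. auto_derive. repeat split; auto. fixeta.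
      rewrite <- (R_phi a b x1 y1 z1 h c Hc1 Hc0 HK1 Hn1 cp u Iu).
      rewrite <- (R_phi a b x2 y2 z2 h c Hc2 Hc0 HK2 Hn2 cp u Iu). ring.
    - intros u Iu. unfold E. assert (0 <= (z1 u - z2 u)^2) by apply pow2_ge_0.
      assert (0 <= (Derive z1 u - Derive z2 u)^2) by apply pow2_ge_0. lra.
    - intros u Iu. unfold E.
      pose proof (HM (z1 u) (z2 u) (z_bounds a b x1 y1 z1 h c Hc1 Hc0 HK1 cp u Iu)
                                 (z_bounds a b x2 y2 z2 h c Hc2 Hc0 HK2 cp u Iu)) as L.
      set (A := z1 u - z2 u) in *. set (B := Derive z1 u - Derive z2 u) in *.
      set (F := phi h c (z1 u) - phi h c (z2 u)) in *. clearbody A B F.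
      assert (H1 : Rabs (2*A*B + 2*B*F) <= 2*Rabs A*Rabs B + 2*Rabs B*Rabs F).
      { eapply Rle_trans. apply Rabs_triang. rewrite !Rabs_mult. rewrite (Rabs_pos_eq 2) by lra. lra. }
      assert (H2 : 2*Rabs B*Rabs F <= 2*Rabs B*(M*Rabs A)).
      { apply Rmult_le_compat_l; auto. apply Rmult_le_pos; [lra|apply Rabs_pos]. }
      assert (H3 : 2*Rabs A*Rabs B <= A^2 + B^2).
      { rewrite <- (pow2_abs A), <- (pow2_abs B). assert (0 <= (Rabs A - Rabs B)^2) by apply pow2_ge_0. nra. }
      assert (H4 : M * (2*Rabs A*Rabs B) <= M * (A^2 + B^2)) by (apply Rmult_le_compat_l; auto).
      nra.
    - unfold E. rewrite E0, E1. ring. }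
  unfold E in HE. assert (0 <= (z1 s - z2 s)^2) by apply pow2_ge_0.
  assert (0 <= (Derive z1 s - Derive z2 s)^2) by apply pow2_ge_0.
  assert ((z1 s - z2 s)^2 = 0) by lra. assert (z1 s - z2 s = 0) by nra. lra.
Qed.

Lemma exists_angle al be : al^2 + be^2 = 1 -> exists th, cos th = al /\ sin th = be.
Proof.
  intros H. assert (Ha : -1 <= al <= 1) by (split; nra).
  assert (Hs : sqrt (1 - al²) = Rabs be).
  { rewrite <- sqrt_Rsqr_abs. f_equal. unfold Rsqr. lra. }
  destruct (Rle_or_lt 0 be) as [Hb|Hb].
  - exists (acos al). rewrite cos_acos, sin_acos by auto. rewrite Hs, Rabs_pos_eq; auto.
  - exists (- acos al). rewrite cos_neg, sin_neg, cos_acos, sin_acos by auto. rewrite Hs, Rabs_left; auto. split; auto; ring.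
Qed.

Lemma Derive_eq_I (a b : Rbar) (f g : R -> R) : (forall u, in_I a b u -> f u = g u) ->
  forall s, in_I a b s -> Derive f s = Derive g s.
Proof.
  intros H s Hs. apply Derive_ext_loc. apply (locally_open _ _ (in_I_open a b)); auto.
Qed.

Lemma xy_formula (a b : Rbar) (x y z : R -> R) : profile_curve a b x y z -> forall s, in_I a b s ->
  Derive x s * (1 - z s ^ 2) = - z s * Derive z s * x s + ang_mom x y s * y s /\
  Derive y s * (1 - z s ^ 2) = - z s * Derive z s * y s - ang_mom x y s * x s.
Proof.
  intros Hc s Hs. pose proof (c1 a b x y z Hc s Hs) as C1. pose proof (c2 a b x y z Hc s Hs) as C2.
  unfold ang_mom.
  replace (1 - z s ^ 2) with (x s * x s + y s * y s) by lra.
  split.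
  - transitivity (x s * (x s * Derive x s + y s * Derive y s) + (Derive x s * y s - x s * Derive y s) * y s). ring.
    replace (x s * Derive x s + y s * Derive y s) with (- (z s * Derive z s)) by lra. ring.
  - transitivity (y s * (x s * Derive x s + y s * Derive y s) - (Derive x s * y s - x s * Derive y s) * x s). ring.
    replace (x s * Derive x s + y s * Derive y s) with (- (z s * Derive z s)) by lra. ring.
Qed.

Lemma rot_pos (a b : Rbar) (x1 y1 z1 x2 y2 z2 : R -> R) :
  profile_curve a b x1 y1 z1 -> profile_curve a b x2 y2 z2 ->
  (forall s, in_I a b s -> z2 s = z1 s) ->
  (forall s, in_I a b s -> ang_mom x2 y2 s = ang_mom x1 y1 s) ->
  (forall s, in_I a b s -> 0 < 1 - z1 s ^ 2) ->
  forall s0, in_I a b s0 ->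
  exists alpha : R, forall s, in_I a b s ->
       x2 s = x1 s * cos alpha - y1 s * sin alpha /\
       y2 s = x1 s * sin alpha + y1 s * cos alpha.
Proof.
  intros Hc1 Hc2 Ez EK Hrho s0 I0.
  set (rho := fun u => 1 - z1 u ^ 2).
  set (P := fun u => x2 u * x1 u + y2 u * y1 u).
  set (Q := fun u => y2 u * x1 u - x2 u * y1 u).
  assert (Dz : forall u, in_I a b u -> Derive z2 u = Derive z1 u) by (intros; apply (Derive_eq_I a b); auto).
  assert (Cst : forall F, (F = P \/ F = Q) -> forall u, in_I a b u -> F u / rho u = F s0 / rho s0).
  { intros F HF u Iu. apply (const_on_I a b (fun v => F v / rho v)); auto.
    intros v Iv.
    destruct (cdx a b x1 y1 z1 Hc1 v Iv) as [X1 _]. destruct (cdy a b x1 y1 z1 Hc1 v Iv) as [Y1 _].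
    destruct (cdz a b x1 y1 z1 Hc1 v Iv) as [Z1 _].
    destruct (cdx a b x2 y2 z2 Hc2 v Iv) as [X2 _]. destruct (cdy a b x2 y2 z2 Hc2 v Iv) as [Y2 _].
    destruct (xy_formula a b x1 y1 z1 Hc1 v Iv) as [F1 G1].
    destruct (xy_formula a b x2 y2 z2 Hc2 v Iv) as [F2 G2].
    rewrite Ez, Dz, EK in F2, G2 by auto.
    pose proof (Hrho v Iv) as Rv.
    destruct HF as [->| ->]; unfold P, Q, rho; auto_derive; try (repeat split; auto; lra); fixeta.
    - apply (Rmult_eq_reg_r ((1 - z1 v ^2)^2)); [|apply Rgt_not_eq; apply pow_lt; lra].
      transitivity ((Derive x2 v * (1 - z1 v ^ 2)) * x1 v + x2 v * (Derive x1 v * (1 - z1 v ^ 2))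
                    + (Derive y2 v * (1 - z1 v ^ 2)) * y1 v + y2 v * (Derive y1 v * (1 - z1 v ^ 2))
                    + 2 * z1 v * Derive z1 v * (x2 v * x1 v + y2 v * y1 v)).
      field. lra. rewrite F1, G1, F2, G2. ring.
    - apply (Rmult_eq_reg_r ((1 - z1 v ^2)^2)); [|apply Rgt_not_eq; apply pow_lt; lra].
      transitivity ((Derive y2 v * (1 - z1 v ^ 2)) * x1 v + y2 v * (Derive x1 v * (1 - z1 v ^ 2))
                    - (Derive x2 v * (1 - z1 v ^ 2)) * y1 v - x2 v * (Derive y1 v * (1 - z1 v ^ 2))
                    + 2 * z1 v * Derive z1 v * (y2 v * x1 v - x2 v * y1 v)).
      field. lra. rewrite F1, G1, F2, G2. ring. }
  set (al := P s0 / rho s0). set (be := Q s0 / rho s0).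
  assert (N1 : forall u, in_I a b u -> x1 u * x1 u + y1 u * y1 u = rho u).
  { intros u Iu. unfold rho. pose proof (c1 a b x1 y1 z1 Hc1 u Iu). lra. }
  assert (N2 : forall u, in_I a b u -> x2 u * x2 u + y2 u * y2 u = rho u).
  { intros u Iu. unfold rho. pose proof (c1 a b x2 y2 z2 Hc2 u Iu). rewrite <- (Ez u Iu). lra. }
  assert (Hab : al^2 + be^2 = 1).
  { unfold al, be. pose proof (Hrho s0 I0). fold (rho s0) in H.
    apply (Rmult_eq_reg_r (rho s0 ^ 2)); [|apply Rgt_not_eq; apply pow_lt; lra].
    transitivity (P s0 ^ 2 + Q s0 ^ 2). field. lra.
    transitivity ((x2 s0 * x2 s0 + y2 s0 * y2 s0) * (x1 s0 * x1 s0 + y1 s0 * y1 s0)). unfold P, Q; ring.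
    rewrite N1, N2 by auto. ring. }
  destruct (exists_angle al be Hab) as [th [Hcos Hsin]].
  exists th. intros s Is. rewrite Hcos, Hsin.
  pose proof (Cst P (or_introl eq_refl) s Is) as CP. pose proof (Cst Q (or_intror eq_refl) s Is) as CQ.
  fold al in CP. fold be in CQ. pose proof (Hrho s Is) as Rs. fold (rho s) in Rs.
  assert (EP : P s = al * rho s) by (rewrite <- CP; field; lra).
  assert (EQ : Q s = be * rho s) by (rewrite <- CQ; field; lra).
  split.
  - apply (Rmult_eq_reg_r (rho s)); [|lra].
    rewrite <- (N1 s Is) at 1.
    transitivity (x1 s * P s - y1 s * Q s). unfold P, Q. ring.
    rewrite EP, EQ. ring.
  - apply (Rmult_eq_reg_r (rho s)); [|lra].
    rewrite <- (N1 s Is) at 1.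
    transitivity (y1 s * P s + x1 s * Q s). unfold P, Q. ring.
    rewrite EP, EQ. ring.
Qed.

Section C0.
Variables (a b : Rbar) (x y z : R -> R) (h : R).
Hypothesis Hc : profile_curve a b x y z.
Hypothesis HK : forall s, in_I a b s -> ang_mom x y s = Khc h 0 (z s).

Lemma K0 : forall u, in_I a b u -> ang_mom x y u = 0.
Proof. intros u Hu. rewrite HK; auto. unfold Khc. unfold Rdiv. ring. Qed.

Lemma kap0 s : in_I a b s -> kapS x y z s = 0.
Proof.
  intros Hs.
  assert (Kr : forall u, in_I a b u -> kapS x y z u * Derive z u = 0).
  { intros u Hu. apply (deriv_zero_fun a b (ang_mom x y) u); auto. apply K0. apply (Kder a b x y z Hc); auto. }
  destruct (Req_dec (kapS x y z s) 0) as [E|E]; auto. exfalso.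
  destruct (cont_nonzero _ s (cont_kapS a b x y z Hc s Hs) E) as [d1 [Hd1 H1]].
  destruct (in_I_loc a b s Hs) as [d2 H2].
  assert (R0 : Derive (Derive z) s = 0).
  { apply (deriv_zero_loc (Derive z) s _ (Rmin d1 d2)).
    - apply Rmin_pos; auto. apply cond_pos.
    - intros u Hu. assert (Hu1 : Rabs (u - s) < d1) by (eapply Rlt_le_trans; [exact Hu| apply Rmin_l]).
      assert (Hu2 : Rabs (u - s) < d2) by (eapply Rlt_le_trans; [exact Hu| apply Rmin_r]).
      pose proof (Kr u (H2 u Hu2)) as E0. pose proof (H1 u Hu1).
      apply Rmult_integral in E0. destruct E0; auto. contradiction.
    - destruct (cdz a b x y z Hc s Hs) as [_ [Z1 _]]. apply Derive_correct. auto. }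
  destruct (frameC a b x y z Hc s Hs) as [_ [_ F3]]. rewrite K0 in F3; auto.
  pose proof (zpos a b x y z Hc s Hs). lra.
Qed.

Lemma second0 s : in_I a b s ->
  Derive (Derive x) s = - x s /\ Derive (Derive y) s = - y s /\ Derive (Derive z) s = - z s.
Proof.
  intros Hs. destruct (frameC a b x y z Hc s Hs) as [F1 [F2 F3]]. rewrite kap0 in F1, F2, F3; auto.
  split; [|split]; lra.
Qed.

End C0.

Lemma lin2_uniq (a b : Rbar) (U U1 : R -> R) :
  (forall s, in_I a b s -> is_derive U s (U1 s)) ->
  (forall s, in_I a b s -> is_derive U1 s (- U s)) ->
  forall s0, in_I a b s0 -> U s0 = 0 -> U1 s0 = 0 -> forall s, in_I a b s -> U s = 0.
Proof.
  intros H1 H2 s0 I0 E0 E1 s Is.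
  assert (C : U s ^ 2 + U1 s ^ 2 = U s0 ^ 2 + U1 s0 ^ 2).
  { apply (const_on_I a b (fun u => U u ^ 2 + U1 u ^ 2)); auto. intros u Iu.
    auto_derive. split; [exists (U1 u); auto | split; [exists (- U u); auto | auto]].
    fixeta. rewrite (is_derive_unique _ _ _ (H1 u Iu)), (is_derive_unique _ _ _ (H2 u Iu)). ring. }
  simpl in C. rewrite E0, E1 in C. assert (0 <= U1 s ^ 2) by apply pow2_ge_0.
  assert (U s ^ 2 = 0) by (assert (0 <= U s ^ 2) by apply pow2_ge_0; lra). nra.
Qed.

Lemma rot_init a1 b1 a2 b2 p1 q1 p2 q2 :
  a1^2 + b1^2 = a2^2 + b2^2 -> p1^2 + q1^2 = p2^2 + q2^2 -> a1*p1 + b1*q1 = a2*p2 + b2*q2 ->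
  p1*b1 - a1*q1 = 0 -> p2*b2 - a2*q2 = 0 -> 0 < a1^2 + b1^2 + p1^2 + q1^2 ->
  exists al be, al^2 + be^2 = 1 /\ a2 = a1*al - b1*be /\ b2 = a1*be + b1*al /\
                p2 = p1*al - q1*be /\ q2 = p1*be + q1*al.
Proof.
  intros N1 N2 T K1 K2 Pos.
  destruct (Rlt_or_le 0 (a1^2+b1^2)) as [Hr|Hr].
  - set (rho := a1^2+b1^2) in *. set (tau := a1*p1+b1*q1) in *.
    exists ((a1*a2+b1*b2)/rho), ((a1*b2-b1*a2)/rho).
    assert (P1 : p1 * rho = a1 * tau) by (unfold rho, tau; transitivity (a1*(a1*p1+b1*q1) + b1*(p1*b1-a1*q1)); [ring| rewrite K1; ring]).
    assert (Q1 : q1 * rho = b1 * tau) by (unfold rho, tau; transitivity (b1*(a1*p1+b1*q1) - a1*(p1*b1-a1*q1)); [ring| rewrite K1; ring]).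
    assert (P2 : p2 * rho = a2 * tau) by (rewrite N1, T; transitivity (a2*(a2*p2+b2*q2) + b2*(p2*b2-a2*q2)); [ring| rewrite K2; ring]).
    assert (Q2 : q2 * rho = b2 * tau) by (rewrite N1, T; transitivity (b2*(a2*p2+b2*q2) - a2*(p2*b2-a2*q2)); [ring| rewrite K2; ring]).
    split; [|split; [|split; [|split]]].
    + apply (Rmult_eq_reg_r (rho^2)); [|apply Rgt_not_eq; apply pow_lt; lra].
      transitivity ((a1^2+b1^2)*(a2^2+b2^2)). field; lra. rewrite <- N1. fold rho. ring.
    + apply (Rmult_eq_reg_r rho); [|lra]. transitivity (a1*(a1*a2+b1*b2) - b1*(a1*b2-b1*a2)). 2: field; lra.
      unfold rho. ring.
    + apply (Rmult_eq_reg_r rho); [|lra]. transitivity (a1*(a1*b2-b1*a2) + b1*(a1*a2+b1*b2)). 2: field; lra.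
      unfold rho. ring.
    + apply (Rmult_eq_reg_r (rho*rho)); [|apply Rgt_not_eq; apply Rmult_lt_0_compat; lra].
      transitivity ((p2*rho)*rho). ring. rewrite P2.
      transitivity ((p1*rho)*(a1*a2+b1*b2) - (q1*rho)*(a1*b2-b1*a2)). 2: field; lra.
      rewrite P1, Q1. transitivity (a2*tau*(a1^2+b1^2)). fold rho; ring. ring.
    + apply (Rmult_eq_reg_r (rho*rho)); [|apply Rgt_not_eq; apply Rmult_lt_0_compat; lra].
      transitivity ((q2*rho)*rho). ring. rewrite Q2.
      transitivity ((p1*rho)*(a1*b2-b1*a2) + (q1*rho)*(a1*a2+b1*b2)). 2: field; lra.
      rewrite P1, Q1. transitivity (b2*tau*(a1^2+b1^2)). fold rho; ring. ring.
  - assert (a1^2+b1^2 = 0) by (assert (0 <= a1^2) by apply pow2_ge_0; assert (0 <= b1^2) by apply pow2_ge_0; lra).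
    assert (a1 = 0) by nra. assert (b1 = 0) by nra.
    assert (a2 = 0) by nra. assert (b2 = 0) by nra. subst.
    set (sg := p1^2+q1^2) in *.
    assert (Sg : 0 < sg) by (unfold sg; rewrite !pow_i in Pos by lia; lra).
    exists ((p1*p2+q1*q2)/sg), ((p1*q2-q1*p2)/sg).
    split; [|split; [|split; [|split]]]; try ring.
    + apply (Rmult_eq_reg_r (sg^2)); [|apply Rgt_not_eq; apply pow_lt; lra].
      transitivity ((p1^2+q1^2)*(p2^2+q2^2)). field; lra. rewrite <- N2. fold sg. ring.
    + apply (Rmult_eq_reg_r sg); [|lra]. transitivity (p1*(p1*p2+q1*q2) - q1*(p1*q2-q1*p2)). 2: field; lra.
      unfold sg. ring.
    + apply (Rmult_eq_reg_r sg); [|lra]. transitivity (p1*(p1*q2-q1*p2) + q1*(p1*p2+q1*q2)). 2: field; lra.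
      unfold sg. ring.
Qed.

Lemma isd (a b : Rbar) (x y z : R -> R) (Hc : profile_curve a b x y z) s (Hs : in_I a b s) :
  is_derive x s (Derive x s) /\ is_derive (Derive x) s (Derive (Derive x) s) /\
  is_derive y s (Derive y s) /\ is_derive (Derive y) s (Derive (Derive y) s) /\
  is_derive z s (Derive z s) /\ is_derive (Derive z) s (Derive (Derive z) s).
Proof.
  destruct (cdx a b x y z Hc s Hs) as [X0 [X1 _]]. destruct (cdy a b x y z Hc s Hs) as [Y0 [Y1 _]].
  destruct (cdz a b x y z Hc s Hs) as [Z0 [Z1 _]].
  repeat split; apply Derive_correct; auto.
Qed.

Lemma part3 (h : R) :
  (forall (c : R) (a b : Rbar) (x1 y1 z1 x2 y2 z2 : R -> R),
     0 <= c < 1/2 ->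
     profile_curve a b x1 y1 z1 -> profile_curve a b x2 y2 z2 ->
     z_nonconstant a b z1 -> z_nonconstant a b z2 ->
     (forall s, in_I a b s -> ang_mom x1 y1 s = Khc h c (z1 s)) ->
     (forall s, in_I a b s -> ang_mom x2 y2 s = Khc h c (z2 s)) ->
     (exists s0, in_I a b s0 /\ z1 s0 = z2 s0 /\ Derive z1 s0 = Derive z2 s0) ->
     exists alpha : R, forall s, in_I a b s ->
       x2 s = x1 s * cos alpha - y1 s * sin alpha /\
       y2 s = x1 s * sin alpha + y1 s * cos alpha /\
       z2 s = z1 s).
Proof.
  intros c a b x1 y1 z1 x2 y2 z2 Hc0 Hc1 Hc2 Hn1 Hn2 HK1 HK2 [s0 [I0 [E0 E1]]].
  destruct (Req_dec c 0) as [c0|cn].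
  - subst c.
    destruct (isd a b x1 y1 z1 Hc1 s0 I0) as [_ [_ [_ [_ [_ _]]]]].
    assert (Ez : forall s, in_I a b s -> z1 s - z2 s = 0).
    { apply (lin2_uniq a b (fun u => z1 u - z2 u) (fun u => Derive z1 u - Derive z2 u)) with s0; auto.
      - intros s Is. destruct (isd a b x1 y1 z1 Hc1 s Is) as [_ [_ [_ [_ [A _]]]]].
        destruct (isd a b x2 y2 z2 Hc2 s Is) as [_ [_ [_ [_ [B _]]]]]. apply (is_derive_minus z1 z2); auto.
      - intros s Is. destruct (isd a b x1 y1 z1 Hc1 s Is) as [_ [_ [_ [_ [_ A]]]]].
        destruct (isd a b x2 y2 z2 Hc2 s Is) as [_ [_ [_ [_ [_ B]]]]].
        destruct (second0 a b x1 y1 z1 h Hc1 HK1 s Is) as [_ [_ S1]].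
        destruct (second0 a b x2 y2 z2 h Hc2 HK2 s Is) as [_ [_ S2]].
        rewrite S1 in A. rewrite S2 in B.
        replace (- (z1 s - z2 s)) with (- z1 s - - z2 s) by ring. apply (is_derive_minus (Derive z1) (Derive z2)); auto.
      - lra.
      - lra. }
    pose proof (c1 a b x1 y1 z1 Hc1 s0 I0) as A1. pose proof (c1 a b x2 y2 z2 Hc2 s0 I0) as A2.
    pose proof (c2 a b x1 y1 z1 Hc1 s0 I0) as B1. pose proof (c2 a b x2 y2 z2 Hc2 s0 I0) as B2.
    pose proof (c3 a b x1 y1 z1 Hc1 s0 I0) as C1. pose proof (c3 a b x2 y2 z2 Hc2 s0 I0) as C2.
    pose proof (K0 a b x1 y1 z1 h HK1 s0 I0) as D1. pose proof (K0 a b x2 y2 z2 h HK2 s0 I0) as D2.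
    pose proof (lagr a b x1 y1 z1 Hc1 s0 I0) as L1.
    unfold ang_mom in D1, D2.
    destruct (rot_init (x1 s0) (y1 s0) (x2 s0) (y2 s0) (Derive x1 s0) (Derive y1 s0) (Derive x2 s0) (Derive y2 s0))
      as [al [be [Hab [R1 [R2 [R3 R4]]]]]].
    + rewrite E0 in A1. nra.
    + rewrite E1 in C1. nra.
    + rewrite E0, E1 in B1. nra.
    + lra.
    + lra.
    + assert (0 <= ang_mom x1 y1 s0 ^ 2) by apply pow2_ge_0.
      assert (0 <= Derive z1 s0 ^ 2) by apply pow2_ge_0. nra.
    + destruct (exists_angle al be Hab) as [th [Hcos Hsin]].
      assert (Ux : forall s, in_I a b s -> x2 s - (x1 s * al - y1 s * be) = 0).
      { apply (lin2_uniq a b (fun u => x2 u - (x1 u * al - y1 u * be))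
              (fun u => Derive x2 u - (Derive x1 u * al - Derive y1 u * be))) with s0; auto.
        - intros s Is. destruct (isd a b x1 y1 z1 Hc1 s Is) as [X1 [_ [Y1 _]]].
          destruct (isd a b x2 y2 z2 Hc2 s Is) as [X2 _].
          auto_derive. repeat split; [exists (Derive x2 s)|exists (Derive x1 s)|exists (Derive y1 s)]; auto.
          fixeta. ring.
        - intros s Is. destruct (isd a b x1 y1 z1 Hc1 s Is) as [_ [X1 [_ [Y1 _]]]].
          destruct (isd a b x2 y2 z2 Hc2 s Is) as [_ [X2 _]].
          destruct (second0 a b x1 y1 z1 h Hc1 HK1 s Is) as [S1 [S2 _]].
          destruct (second0 a b x2 y2 z2 h Hc2 HK2 s Is) as [S3 _].
          auto_derive. repeat split; [exists (Derive (Derive x2) s)|exists (Derive (Derive x1) s)|exists (Derive (Derive y1) s)]; auto.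
          fixeta.
          rewrite S1, S2, S3. ring.
        - rewrite R1. ring.
        - rewrite R3. ring. }
      assert (Uy : forall s, in_I a b s -> y2 s - (x1 s * be + y1 s * al) = 0).
      { apply (lin2_uniq a b (fun u => y2 u - (x1 u * be + y1 u * al))
              (fun u => Derive y2 u - (Derive x1 u * be + Derive y1 u * al))) with s0; auto.
        - intros s Is. destruct (isd a b x1 y1 z1 Hc1 s Is) as [X1 [_ [Y1 _]]].
          destruct (isd a b x2 y2 z2 Hc2 s Is) as [_ [_ [Y2 _]]].
          auto_derive. repeat split; [exists (Derive y2 s)|exists (Derive x1 s)|exists (Derive y1 s)]; auto.
          fixeta. ring.
        - intros s Is. destruct (isd a b x1 y1 z1 Hc1 s Is) as [_ [X1 [_ [Y1 _]]]].
          destruct (isd a b x2 y2 z2 Hc2 s Is) as [_ [_ [_ [Y2 _]]]].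
          destruct (second0 a b x1 y1 z1 h Hc1 HK1 s Is) as [S1 [S2 _]].
          destruct (second0 a b x2 y2 z2 h Hc2 HK2 s Is) as [_ [S3 _]].
          auto_derive. repeat split; [exists (Derive (Derive y2) s)|exists (Derive (Derive x1) s)|exists (Derive (Derive y1) s)]; auto.
          fixeta.
          rewrite S1, S2, S3. ring.
        - rewrite R2. ring.
        - rewrite R4. ring. }
      exists th. intros s Is. rewrite Hcos, Hsin.
      pose proof (Ux s Is). pose proof (Uy s Is). pose proof (Ez s Is).
      split; [|split]; lra.
  - assert (cp : 0 < c) by lra.
    assert (Ez : forall s, in_I a b s -> z1 s = z2 s).
    { apply (zuniq_pos a b x1 y1 z1 x2 y2 z2 h c cp (proj2 Hc0) Hc1 Hc2 Hn1 Hn2 HK1 HK2 s0 I0 E0 E1). }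
    assert (HK1' : forall s, in_I a b s -> ang_mom x1 y1 s = 1 * Khc h c (z1 s)) by (intros; rewrite HK1; auto; ring).
    assert (H1 : forall s, in_I a b s -> z2 s = z1 s) by (intros s Is; symmetry; auto).
    assert (H2 : forall s, in_I a b s -> ang_mom x2 y2 s = ang_mom x1 y1 s) by (intros s Is; rewrite HK1, HK2, Ez; auto).
    assert (H3 : forall s, in_I a b s -> 0 < 1 - z1 s ^ 2).
    { intros s Is. pose proof (K2 a b x1 y1 z1 h c 1 Hc1 (or_introl eq_refl) HK1' s Is) as KK.
      pose proof (lagr a b x1 y1 z1 Hc1 s Is) as L. pose proof (zpos a b x1 y1 z1 Hc1 s Is) as Zp.
      pose proof (zle1 a b x1 y1 z1 Hc1 s Is) as Z1.
      set (K := ang_mom x1 y1 s) in *. set (w := z1 s) in *. clearbody K w.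
      assert (0 < c^2 * (h^2 + (1 - h^2) * w^2)).
      { apply Rmult_lt_0_compat. apply pow_lt; auto.
        assert (0 <= h^2 * (1 - w^2)) by (apply Rmult_le_pos; [apply pow2_ge_0|lra]).
        assert (0 < w^2) by (apply pow_lt; auto). lra. }
      assert (K <> 0). { intro K0'. rewrite K0' in KK. rewrite pow_i in KK by lia. lra. }
      assert (0 < K*K) by (apply Rsqr_pos_lt; auto).
      assert (0 <= Derive z1 s ^ 2) by apply pow2_ge_0. nra. }
    destruct (rot_pos a b x1 y1 z1 x2 y2 z2 Hc1 Hc2 H1 H2 H3 s0 I0) as [al Hal].
    exists al. intros s Is. destruct (Hal s Is). split; auto.
Qed.


Section Exist.
Variables (h c : R).
Hypothesis cp : 0 < c.
Hypothesis c12 : c < 1/2.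

Definition A0 := sqrt (1/4 - c^2).
Lemma A0_bounds : 0 < A0 < 1/2 /\ A0^2 = 1/4 - c^2.
Proof.
  unfold A0. assert (0 < 1/4 - c^2) by nra.
  assert (E : sqrt (1/4 - c^2) ^ 2 = 1/4 - c^2) by (apply pow2_sqrt; lra).
  assert (P : 0 < sqrt (1/4 - c^2)) by (apply sqrt_lt_R0; auto).
  split; auto. split; auto. assert (0 < c^2) by (apply pow_lt; auto). nra.
Qed.

Definition wl := sqrt (1/2 - A0).
Definition wu := sqrt (1/2 + A0).
Definition V := in_I (Finite wl) (Finite wu).

Lemma sqrt_lt_sq u w : 0 <= u -> 0 < w -> sqrt u < w -> u < w^2.
Proof. intros Hu Hw H. assert (E : sqrt u ^ 2 = u) by (apply pow2_sqrt; auto).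
  assert (0 <= sqrt u) by apply sqrt_pos. nra. Qed.
Lemma sq_lt_sqrt u w : 0 <= u -> 0 < w -> w < sqrt u -> w^2 < u.
Proof. intros Hu Hw H. assert (E : sqrt u ^ 2 = u) by (apply pow2_sqrt; auto). nra. Qed.

Lemma V_facts w : V w -> 0 < w /\ 1/2 - A0 < w^2 < 1/2 + A0.
Proof.
  intros [H1 H2]. simpl in H1, H2. destruct A0_bounds as [[Ap Ah] _].
  assert (0 < wl) by (apply sqrt_lt_R0; lra).
  assert (0 < w) by lra. split; auto. split.
  - apply sqrt_lt_sq; auto; lra.
  - apply sq_lt_sqrt; auto; lra.
Qed.

Definition fF w := 1 - w^2 - c^2 * (h^2 + (1 - h^2) * w^2) / (w^4 + h^2 * c^2).

Lemma D4_pos w : 0 < w -> 0 < w^4 + h^2 * c^2.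
Proof. intros. assert (0 <= h^2*c^2) by (apply Rmult_le_pos; apply pow2_ge_0). assert (0 < w^4) by (apply pow_lt; auto). lra. Qed.

Lemma fF_pos w : V w -> 0 < fF w.
Proof.
  intros Hw. destruct (V_facts w Hw) as [wp [W1 W2]]. destruct A0_bounds as [[Ap Ah] AE].
  pose proof (D4_pos w wp).
  assert (E : fF w * (w^4 + h^2 * c^2) = w^2 * (A0^2 - (w^2 - 1/2)^2)).
  { unfold fF. rewrite AE. field. lra. }
  assert (0 < w^2) by (apply pow_lt; auto).
  assert (0 < A0^2 - (w^2 - 1/2)^2) by nra.
  assert (0 < fF w * (w^4 + h^2 * c^2)) by (rewrite E; apply Rmult_lt_0_compat; auto).
  nra.
Qed.

Lemma w2_lt1 w : V w -> w^2 < 1.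
Proof. intros Hw. destruct (V_facts w Hw) as [_ [_ W2]]. destruct A0_bounds as [[Ap Ah] _]. lra. Qed.

Lemma G_pos w : V w -> 0 < h^2 + (1 - h^2) * w^2.
Proof. intros Hw. pose proof (w2_lt1 w Hw). destruct (V_facts w Hw) as [wp _].
  assert (0 <= h^2 * (1 - w^2)) by (apply Rmult_le_pos; [apply pow2_ge_0|lra]).
  assert (0 < w^2) by (apply pow_lt; auto). lra. Qed.

Definition phiF w := sqrt (fF w).
Definition sdF w := / phiF w.
Definition omF w := - Khc h c w / (1 - w^2).
Definition thF w := omF w / phiF w.

Lemma V_open : open V.
Proof. apply in_I_open. Qed.

Lemma fF_Ck n : Ck V n fF.
Proof. unfold fF. ck V_open. intros w Hw. apply D4_pos. apply (V_facts w Hw). Qed.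

Lemma phiF_Ck n : Ck V n phiF.
Proof. unfold phiF. apply Ck_sqrt_f. apply V_open. apply fF_Ck. apply fF_pos. Qed.

Lemma phiF_pos w : V w -> 0 < phiF w.
Proof. intros. apply sqrt_lt_R0. apply fF_pos; auto. Qed.

Lemma sdF_Ck n : Ck V n sdF.
Proof. unfold sdF. apply Ck_inv. apply V_open. apply phiF_Ck. apply phiF_pos. Qed.

Lemma thF_Ck n : Ck V n thF.
Proof.
  unfold thF, omF, Khc. apply (Ck_mult V n V_open (fun w => - (- (c * sqrt (h ^ 2 + (1 - h ^ 2) * w ^ 2)) / sqrt (w ^ 4 + h ^ 2 * c ^ 2)) / (1 - w ^ 2)) (fun w => / phiF w)).
  - ck V_open.
    + intros w Hw. apply G_pos; auto.
    + intros w Hw. apply D4_pos. apply (V_facts w Hw).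
    + intros w Hw. apply sqrt_lt_R0. apply D4_pos. apply (V_facts w Hw).
    + intros w Hw. pose proof (w2_lt1 w Hw). lra.
  - apply Ck_inv. apply V_open. apply phiF_Ck. apply phiF_pos.
Qed.


Definition pp := sqrt (1/2 - A0/2).
Definition qq := sqrt (1/2 + A0/2).

Lemma pq_facts : V pp /\ V qq /\ pp < qq.
Proof.
  destruct A0_bounds as [[Ap Ah] _]. unfold V, in_I, pp, qq, wl, wu; simpl.
  repeat split; apply sqrt_lt_1; lra.
Qed.

Lemma V_conv w1 w2 u : V w1 -> V w2 -> w1 <= u <= w2 -> V u.
Proof. apply in_I_conv. Qed.

Lemma Ck_cont g : Ck V 1 g -> forall w, V w -> continuous g w.
Proof.
  intros H w Hw. destruct (Ck_S_inv _ _ _ H) as [H1 _].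
  apply (ex_derive_continuous (K:=R_AbsRing) (V:=R_NormedModule)). auto.
Qed.

Lemma RInt_is_derive g : Ck V 1 g -> forall w, V w -> is_derive (fun u => RInt g pp u) w (g w).
Proof.
  intros Hg w Hw. destruct pq_facts as [Vp _].
  apply (is_derive_RInt g (fun u => RInt g pp u) pp w).
  - apply (locally_open _ _ V_open); auto. intros b Hb. apply (RInt_correct (V:=R_CompleteNormedModule)).
    apply (ex_RInt_continuous (V:=R_CompleteNormedModule)). intros u Hu. apply Ck_cont; auto.
    apply (V_conv (Rmin pp b) (Rmax pp b)); auto; unfold Rmin, Rmax; destruct Rle_dec; auto.
  - apply Ck_cont; auto.
Qed.

Definition SF w := RInt sdF pp w.
Definition ThF w := RInt thF pp w.

Lemma SF_der w : V w -> is_derive SF w (sdF w).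
Proof. apply RInt_is_derive. apply sdF_Ck. Qed.
Lemma ThF_der w : V w -> is_derive ThF w (thF w).
Proof. apply RInt_is_derive. apply thF_Ck. Qed.

Lemma ThF_Ck n : Ck V n ThF.
Proof.
  destruct n. intros k Hk; assert (k = 0%nat) by lia; subst; intros; exact I.
  apply (Ck_deriv V n ThF thF V_open). apply ThF_der. apply thF_Ck.
Qed.

Lemma sdF_pos w : V w -> 0 < sdF w.
Proof. intros. unfold sdF. apply Rinv_0_lt_compat. apply phiF_pos; auto. Qed.

Lemma SF_incr w1 w2 : V w1 -> V w2 -> w1 < w2 -> SF w1 < SF w2.
Proof.
  intros V1 V2 H. destruct (MVT_gen SF w1 w2 sdF) as [xi [Hxi Hm]].
  - intros u Hu. rewrite Rmin_left, Rmax_right in Hu by lra. apply SF_der. apply (V_conv w1 w2); auto; lra.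
  - intros u Hu. rewrite Rmin_left, Rmax_right in Hu by lra. apply continuity_pt_filterlim.
    apply (ex_derive_continuous (K:=R_AbsRing) (V:=R_NormedModule)). exists (sdF u). apply SF_der. apply (V_conv w1 w2); auto; lra.
  - rewrite Rmin_left, Rmax_right in Hxi by lra.
    assert (0 < sdF xi) by (apply sdF_pos; apply (V_conv w1 w2); auto; lra).
    assert (0 < sdF xi * (w2 - w1)) by (apply Rmult_lt_0_compat; lra). lra.
Qed.

Lemma SF_cont w : V w -> continuity_pt SF w.
Proof. intros. apply continuity_pt_filterlim.
  apply (ex_derive_continuous (K:=R_AbsRing) (V:=R_NormedModule)). exists (sdF w). apply SF_der; auto. Qed.


Definition Sp := SF pp.
Definition Sq := SF qq.
Definition zf s := epsilon (inhabits 0) (fun w => pp <= w <= qq /\ SF w = s).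

Lemma in_pq w : pp <= w <= qq -> V w.
Proof. intros. destruct pq_facts as [Vp [Vq _]]. apply (V_conv pp qq); auto. Qed.

Lemma zf_spec s : Sp <= s <= Sq -> pp <= zf s <= qq /\ SF (zf s) = s.
Proof.
  intros Hs. unfold zf. apply epsilon_spec.
  destruct pq_facts as [Vp [Vq Hpq]].
  destruct (Req_dec s Sp) as [->|N1]. exists pp. split; [lra|reflexivity].
  destruct (Req_dec s Sq) as [->|N2]. exists qq. split; [lra|reflexivity].
  destruct (Ranalysis5.IVT_interv (fun w => SF w - s) pp qq) as [w [Hw1 Hw2]].
  - intros a Ha. apply continuity_pt_minus. apply SF_cont. apply in_pq; auto. apply continuity_pt_const. intros u v; auto.
  - auto.
  - unfold Sp in *. lra.
  - unfold Sq in *. lra.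
  - exists w. split; auto. lra.
Qed.

Lemma zf_SF w : pp <= w <= qq -> zf (SF w) = w.
Proof.
  intros Hw. destruct pq_facts as [Vp [Vq Hpq]].
  assert (Hs : Sp <= SF w <= Sq).
  { unfold Sp, Sq. split.
    - destruct (Req_dec w pp) as [->|N]; [lra|]. left. apply SF_incr; auto. apply in_pq; auto. lra.
    - destruct (Req_dec w qq) as [->|N]; [lra|]. left. apply SF_incr; auto. apply in_pq; auto. lra. }
  destruct (zf_spec _ Hs) as [H1 H2].
  destruct (Rtotal_order (zf (SF w)) w) as [L|[E|L]]; auto; exfalso.
  - assert (SF (zf (SF w)) < SF w) by (apply SF_incr; auto; apply in_pq; auto). lra.
  - assert (SF w < SF (zf (SF w))) by (apply SF_incr; auto; apply in_pq; auto). lra.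
Qed.

Lemma Sp_lt_Sq : Sp < Sq.
Proof. destruct pq_facts as [Vp [Vq Hpq]]. apply SF_incr; auto. Qed.

Definition Uo := in_I (Finite Sp) (Finite Sq).

Lemma Uo_zf s : Uo s -> V (zf s) /\ pp <= zf s <= qq.
Proof. intros [H1 H2]. simpl in *. destruct (zf_spec s) as [A _]. lra. split; auto. apply in_pq; auto. Qed.

Lemma zf_der s : Uo s -> is_derive zf s (phiF (zf s)).
Proof.
  intros Hs. pose proof Hs as [H1 H2]. simpl in H1, H2.
  destruct pq_facts as [Vp [Vq Hpq]].
  assert (Zp : zf Sp = pp) by (apply zf_SF; lra). assert (Zq : zf Sq = qq) by (apply zf_SF; lra).
  assert (Prf : forall a, zf Sp <= a <= zf Sq -> derivable_pt SF a).
  { intros a Ha. rewrite Zp, Zq in Ha. exists (sdF a). apply is_derive_Reals. apply SF_der. apply in_pq; auto. }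
  assert (Cz : continuity_pt zf s).
  { apply (Ranalysis5.continuity_pt_recip_interv SF zf pp qq); auto.
    - intros u v Hu Huv Hv. apply SF_incr; auto; apply in_pq; lra.
    - intros u Hu1 Hu2. unfold comp, id. apply zf_spec. unfold Sp, Sq; lra.
    - intros u Hu1 Hu2. apply zf_spec. unfold Sp, Sq; lra.
    - intros u Hu. apply SF_cont. apply in_pq; auto. }
  assert (Pi : zf Sp <= zf s <= zf Sq).
  { rewrite Zp, Zq. apply zf_spec. lra. }
  pose proof (Ranalysis5.derivable_pt_lim_recip_interv SF zf Sp Sq s Prf Cz Sp_lt_Sq (conj H1 H2) Pi) as D.
  assert (Dv : derive_pt SF (zf s) (Prf (zf s) Pi) = sdF (zf s)).
  { apply derive_pt_eq_0. apply is_derive_Reals. apply SF_der. apply (Uo_zf s Hs). }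
  rewrite Dv in D.
  apply is_derive_Reals. replace (phiF (zf s)) with (1 / sdF (zf s)).
  apply D.
  - intros u Hu. unfold comp, id. apply zf_spec. lra.
  - apply Rgt_not_eq. apply sdF_pos. apply (Uo_zf s Hs).
  - unfold sdF. field. apply Rgt_not_eq. apply phiF_pos. apply (Uo_zf s Hs).
Qed.

Lemma Uo_open : open Uo.
Proof. apply in_I_open. Qed.

Lemma zf_Ck n : Ck Uo n zf.
Proof.
  induction n as [|n IH].
  - intros k Hk; assert (k = 0%nat) by lia; subst; intros; exact I.
  - apply (Ck_deriv Uo n zf (fun s => phiF (zf s)) Uo_open). apply zf_der.
    apply (Ck_comp Uo V n Uo_open V_open phiF zf); auto. apply phiF_Ck. intros s Hs. apply Uo_zf; auto.
Qed.


Definition Xh w := sqrt (1 - w^2) * cos (ThF w).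
Definition Yh w := sqrt (1 - w^2) * sin (ThF w).
Definition xF s := Xh (zf s).
Definition yF s := Yh (zf s).

Lemma Xh_Ck n : Ck V n Xh.
Proof.
  unfold Xh. apply (Ck_mult V n V_open (fun w => sqrt (1 - w^2)) (fun w => cos (ThF w))).
  - ck V_open. intros w Hw. pose proof (w2_lt1 w Hw). lra.
  - apply Ck_cos_f. apply V_open. apply ThF_Ck.
Qed.
Lemma Yh_Ck n : Ck V n Yh.
Proof.
  unfold Yh. apply (Ck_mult V n V_open (fun w => sqrt (1 - w^2)) (fun w => sin (ThF w))).
  - ck V_open. intros w Hw. pose proof (w2_lt1 w Hw). lra.
  - apply Ck_sin_f. apply V_open. apply ThF_Ck.
Qed.

Lemma xF_Ck n : Ck Uo n xF.
Proof. unfold xF. apply (Ck_comp Uo V n Uo_open V_open Xh zf). apply Xh_Ck. apply zf_Ck. intros; apply Uo_zf; auto. Qed.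
Lemma yF_Ck n : Ck Uo n yF.
Proof. unfold yF. apply (Ck_comp Uo V n Uo_open V_open Yh zf). apply Yh_Ck. apply zf_Ck. intros; apply Uo_zf; auto. Qed.

Lemma Kc2 w : V w -> Khc h c w ^ 2 = c^2 * (h^2 + (1 - h^2) * w^2) / (w^4 + h^2 * c^2).
Proof.
  intros Hw. destruct (V_facts w Hw) as [wp _]. pose proof (D4_pos w wp). pose proof (G_pos w Hw).
  unfold Khc.
  assert (S1 : sqrt (h ^ 2 + (1 - h ^ 2) * w ^ 2) ^ 2 = h ^ 2 + (1 - h ^ 2) * w ^ 2) by (apply pow2_sqrt; lra).
  assert (S2 : sqrt (w^4 + h^2*c^2) ^ 2 = w^4 + h^2*c^2) by (apply pow2_sqrt; lra).
  assert (S3 : 0 < sqrt (w^4 + h^2*c^2)) by (apply sqrt_lt_R0; auto).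
  transitivity (c^2 * sqrt (h ^ 2 + (1 - h ^ 2) * w ^ 2) ^ 2 / sqrt (w^4 + h^2*c^2) ^ 2).
  field. lra. rewrite S1, S2. reflexivity.
Qed.

Lemma curve_derivs s : Uo s ->
  let w := zf s in let Rr := sqrt (1 - w^2) in let T := ThF w in
  Derive zf s = phiF w /\
  Derive xF s = - (w * phiF w / Rr) * cos T - Rr * sin T * (thF w * phiF w) /\
  Derive yF s = - (w * phiF w / Rr) * sin T + Rr * cos T * (thF w * phiF w).
Proof.
  intros Hs w Rr T. destruct (Uo_zf s Hs) as [Vw _]. fold w in Vw.
  pose proof (w2_lt1 w Vw) as W1.
  assert (Rp : 0 < Rr) by (apply sqrt_lt_R0; lra).
  pose proof (zf_der s Hs) as Dz. fold w in Dz.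
  pose proof (ThF_der w Vw) as DT.
  split; [|split].
  - apply is_derive_unique; auto.
  - apply is_derive_unique. unfold xF, Xh. auto_derive.
    + repeat split; try (exists (phiF w); exact Dz); try (exists (thF w); exact DT); fold w; lra.
    + fixeta. rewrite (is_derive_unique _ _ _ Dz). fold w. rewrite (is_derive_unique _ _ _ DT). fold Rr T.
      replace (sqrt (1 + - (w * (w * 1)))) with Rr by (unfold Rr; f_equal; ring). unfold T. field. lra.
  - apply is_derive_unique. unfold yF, Yh. auto_derive.
    + repeat split; try (exists (phiF w); exact Dz); try (exists (thF w); exact DT); fold w; lra.
    + fixeta. rewrite (is_derive_unique _ _ _ Dz). fold w. rewrite (is_derive_unique _ _ _ DT). fold Rr T.
      replace (sqrt (1 + - (w * (w * 1)))) with Rr by (unfold Rr; f_equal; ring). unfold T. field. lra.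
Qed.


Lemma exist_pos : exists (a b : Rbar) (x y z : R -> R),
       profile_curve a b x y z /\ z_nonconstant a b z /\
       forall s, in_I a b s -> ang_mom x y s = Khc h c (z s).
Proof.
  exists (Finite Sp), (Finite Sq), xF, yF, zf.
  assert (Main : forall s, Uo s ->
    xF s ^ 2 + yF s ^ 2 + zf s ^ 2 = 1 /\
    Derive xF s ^ 2 + Derive yF s ^ 2 + Derive zf s ^ 2 = 1 /\
    ang_mom xF yF s = Khc h c (zf s)).
  { intros s Hs. destruct (curve_derivs s Hs) as [Dz [Dx Dy]]. cbv zeta in Dz, Dx, Dy.
    rewrite Dz, Dx, Dy. unfold ang_mom. rewrite Dx, Dy. unfold xF, yF, Xh, Yh.
    destruct (Uo_zf s Hs) as [Vw _].
    set (w := zf s) in *. clearbody w.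
    pose proof (w2_lt1 w Vw) as W1.
    assert (Rp : 0 < sqrt (1 - w^2)) by (apply sqrt_lt_R0; lra).
    assert (HR2 : sqrt (1 - w^2) ^ 2 = 1 - w^2) by (apply pow2_sqrt; lra).
    pose proof (phiF_pos w Vw) as Pp.
    assert (HP2 : phiF w ^ 2 = 1 - w^2 - Khc h c w ^ 2).
    { unfold phiF. rewrite pow2_sqrt. unfold fF. rewrite Kc2 by auto. reflexivity.
      left. apply fF_pos; auto. }
    set (Rr := sqrt (1 - w^2)) in *. set (T := ThF w) in *. set (Kc := Khc h c w) in *.
    set (ph := phiF w) in *.
    assert (Th : thF w * ph = - Kc / Rr ^ 2).
    { unfold thF, omF. fold Kc ph. rewrite HR2. field. split; lra. }
    pose proof (sin2_cos2 T) as SC. unfold Rsqr in SC.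
    clearbody Rr T Kc ph.
    split; [|split].
    - transitivity (Rr^2 * (sin T * sin T + cos T * cos T) + w^2). ring. rewrite SC, HR2. ring.
    - transitivity ((w * ph / Rr)^2 * (sin T * sin T + cos T * cos T) + Rr^2 * (thF w * ph)^2 * (sin T * sin T + cos T * cos T) + ph^2).
      ring. rewrite SC, Th.
      transitivity ((w^2 * ph^2 + Kc^2 + Rr^2 * ph^2) / Rr^2). field. lra.
      rewrite HP2, HR2. field. lra.
    - transitivity (- Rr^2 * (thF w * ph) * (sin T * sin T + cos T * cos T)). field. lra.
      rewrite SC, Th. field. lra. }
  pose proof Sp_lt_Sq as SpSq.
  split; [|split].
  - split. simpl. exact SpSq.
    intros s Hs. destruct (Main s Hs) as [M1 [M2 _]].
    split; [|split; [|split]]; auto.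
    + intros n. split; [|split].
      * apply (xF_Ck n n (le_n n) s Hs).
      * apply (yF_Ck n n (le_n n) s Hs).
      * apply (zf_Ck n n (le_n n) s Hs).
    + destruct (Uo_zf s Hs) as [Vw _]. apply (V_facts _ Vw).
  - exists ((2*Sp+Sq)/3), ((Sp+2*Sq)/3).
    assert (I1 : in_I Sp Sq ((2*Sp+Sq)/3)) by (split; simpl; lra).
    assert (I2 : in_I Sp Sq ((Sp+2*Sq)/3)) by (split; simpl; lra).
    split; auto. split; auto. intro E.
    destruct (zf_spec ((2*Sp+Sq)/3)) as [_ E1]. lra.
    destruct (zf_spec ((Sp+2*Sq)/3)) as [_ E2]. lra.
    rewrite E in E1. lra.
  - intros s Hs. apply (Main s Hs).
Qed.

End Exist.

Lemma exist_0 (h : R) : exists (a b : Rbar) (x y z : R -> R),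
       profile_curve a b x y z /\ z_nonconstant a b z /\
       forall s, in_I a b s -> ang_mom x y s = Khc h 0 (z s).
Proof.
  exists (Finite (-(PI/2))), (Finite (PI/2)), sin, (fun _ => 0), cos.
  pose proof PI_RGT_0 as Pi.
  assert (Dsin : forall s, Derive sin s = cos s) by (intros; apply is_derive_unique; auto_derive; auto; ring).
  assert (Dcos : forall s, Derive cos s = - sin s) by (intros; apply is_derive_unique; auto_derive; auto; ring).
  assert (D0 : forall s, Derive (fun _ : R => 0) s = 0) by (intros; apply is_derive_unique; auto_derive; auto).
  split; [|split].
  - split. simpl. lra.
    intros s [H1 H2]. simpl in H1, H2.
    split; [|split; [|split]].
    + intros n. split; [|split].
      * destruct (Ck_cos_sin n) as [_ S]. apply (S n (le_n n) s I).
      * apply ex_derive_n_const.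
      * destruct (Ck_cos_sin n) as [C _]. apply (C n (le_n n) s I).
    + pose proof (sin2_cos2 s) as E. unfold Rsqr in E. nra.
    + apply cos_gt_0; lra.
    + rewrite Dsin, Dcos, D0. pose proof (sin2_cos2 s) as E. unfold Rsqr in E. nra.
  - exists 0, (PI/3). split; [split; simpl; lra|]. split; [split; simpl; lra|].
    rewrite cos_0, cos_PI3. lra.
  - intros s _. unfold ang_mom, Khc. rewrite D0. unfold Rdiv. ring.
Qed.

Lemma part2 (h : R) : forall c : R, 0 <= c < 1/2 ->
     exists (a b : Rbar) (x y z : R -> R),
       profile_curve a b x y z /\ z_nonconstant a b z /\
       forall s, in_I a b s -> ang_mom x y s = Khc h c (z s).
Proof.
  intros c [H1 H2]. destruct (Req_dec c 0) as [->|N].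
  - apply exist_0.
  - apply exist_pos; lra.
Qed.


Theorem corollary5p1 (h : R) (hh : 0 <= h) :
  (* (1) classification: a helicoidal surface of pitch h whose profile curve has
     non-constant z is minimal iff its angular momentum is +-K^h_c(z), 0 <= c < 1/2
     (the sign depending on orientation) *)
  (forall (a b : Rbar) (x y z : R -> R),
     profile_curve a b x y z -> z_nonconstant a b z ->
     (minimal_in_S3 (strip a b) (helicoidal h x y z) <->
      exists c eps : R, 0 <= c < 1/2 /\ (eps = 1 \/ eps = -1) /\
        forall s, in_I a b s -> ang_mom x y s = eps * Khc h c (z s))) /\
  (* (2) every member of the family exists *)
  (forall c : R, 0 <= c < 1/2 ->
     exists (a b : Rbar) (x y z : R -> R),
       profile_curve a b x y z /\ z_nonconstant a b z /\
       forall s, in_I a b s -> ang_mom x y s = Khc h c (z s)) /\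
  (* (3) the profile curve is determined by K^h_c up to rotations of the
     (x1,x2)-plane (translations along c_0), once the parametrization is
     normalised by the initial values of z and z' *)
  (forall (c : R) (a b : Rbar) (x1 y1 z1 x2 y2 z2 : R -> R),
     0 <= c < 1/2 ->
     profile_curve a b x1 y1 z1 -> profile_curve a b x2 y2 z2 ->
     z_nonconstant a b z1 -> z_nonconstant a b z2 ->
     (forall s, in_I a b s -> ang_mom x1 y1 s = Khc h c (z1 s)) ->
     (forall s, in_I a b s -> ang_mom x2 y2 s = Khc h c (z2 s)) ->
     (exists s0, in_I a b s0 /\ z1 s0 = z2 s0 /\ Derive z1 s0 = Derive z2 s0) ->
     exists alpha : R, forall s, in_I a b s ->
       x2 s = x1 s * cos alpha - y1 s * sin alpha /\
       y2 s = x1 s * sin alpha + y1 s * cos alpha /\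
       z2 s = z1 s).
Proof.
  split; [|split].
  - apply (part1 h hh).
  - apply (part2 h).
  - apply (part3 h).
Qed.
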